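(* Let $\delta>0$ and let $x:[0,1]\to\mathbb{D}_{1+\delta}\setminus\dot{\mathbb{D}}$ be a $C^1$ closed curve ($x(0)=x(1)$). Then for any capping disc $u:D\to\mathbb{R}^2$ of $x$, \[ \Big|\int_D u^*\omega-\pi\deg(x)\Big|\le L(x)\,\delta, \] where $\deg(x)\in\mathbb{Z}$ is the winding number of $x$ around the origin and $L(x)$ is the Euclidean length of $x$.
   Context: $\omega=dx\wedge dy$ on $\mathbb{R}^2$; $\mathbb{D}$ is the closed unit disc, $\dot{\mathbb{D}}$ its interior, and $\mathbb{D}_{1+\delta}$ the closed disc of radius $1+\delta$ centered at $0$. A capping disc of $x$ is a map $u$ from the closed unit disc $D$ with $u|_{\partial D}$ parametrizing $x$. *)

(* Defs.v *)
From Stdlib Require Import Reals.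
From Coquelicot Require Import Coquelicot.
Open Scope R_scope.

(* A plane curve is given by its two coordinate functions c1 c2 : R -> R,
   of which only the restriction to [0,1] matters. *)

Definition C1_curve (c1 c2 : R -> R) : Prop :=
  forall t, 0 <= t <= 1 ->
    ex_derive c1 t /\ ex_derive c2 t /\
    continuous (Derive c1) t /\ continuous (Derive c2) t.

Definition closed_curve (c1 c2 : R -> R) : Prop :=
  c1 0 = c1 1 /\ c2 0 = c2 1.

Definition curve_length (c1 c2 : R -> R) : R :=
  RInt (fun t => sqrt (Derive c1 t ^ 2 + Derive c2 t ^ 2)) 0 1.

Definition winding_number (c1 c2 : R -> R) (n : Z) : Prop :=
  exists theta : R -> R,
    (forall t, 0 <= t <= 1 ->
       filterlim theta (within (fun s => 0 <= s <= 1) (locally t))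
                 (locally (theta t))) /\
    (forall t, 0 <= t <= 1 ->
       c1 t = sqrt (c1 t ^ 2 + c2 t ^ 2) * cos (theta t) /\
       c2 t = sqrt (c1 t ^ 2 + c2 t ^ 2) * sin (theta t)) /\
    theta 1 - theta 0 = 2 * PI * IZR n.

Definition pd1 (f : R -> R -> R) (a b : R) : R := Derive (fun s => f s b) a.
Definition pd2 (f : R -> R -> R) (a b : R) : R := Derive (fun s => f a s) b.

Definition C1_on2 (P : R -> R -> Prop) (f : R -> R -> R) : Prop :=
  forall a b, P a b ->
    ex_derive (fun s => f s b) a /\ ex_derive (fun s => f a s) b /\
    continuous (fun p : R * R => pd1 f (fst p) (snd p)) (a, b) /\
    continuous (fun p : R * R => pd2 f (fst p) (snd p)) (a, b).

(* Jacobian determinant of u = (u1,u2): (u^* omega) = jac dx /\ dy. *)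
Definition jac (u1 u2 : R -> R -> R) (a b : R) : R :=
  pd1 u1 a b * pd2 u2 a b - pd2 u1 a b * pd1 u2 a b.

(* \int_D u^* omega over the closed unit disc D, as an iterated integral. *)
Definition disc_integral (g : R -> R -> R) : R :=
  RInt (fun a => RInt (fun b => g a b) (- sqrt (1 - a ^ 2)) (sqrt (1 - a ^ 2)))
       (-1) 1.

Definition pullback_area (u1 u2 : R -> R -> R) : R := disc_integral (jac u1 u2).

Definition capping_disc (c1 c2 : R -> R) (u1 u2 : R -> R -> R) : Prop :=
  (exists eps, 0 < eps /\
     C1_on2 (fun a b => a ^ 2 + b ^ 2 < (1 + eps) ^ 2) u1 /\
     C1_on2 (fun a b => a ^ 2 + b ^ 2 < (1 + eps) ^ 2) u2) /\
  (forall t, 0 <= t <= 1 ->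
     u1 (cos (2 * PI * t)) (sin (2 * PI * t)) = c1 t /\
     u2 (cos (2 * PI * t)) (sin (2 * PI * t)) = c2 t).

(* Main.v *)
Require Import Defs.
From Stdlib Require Import Reals Lra Psatz ZArith Lia.
From Coquelicot Require Import Coquelicot.
Open Scope R_scope.

Definition Om (e a b : R) : Prop := a ^ 2 + b ^ 2 < (1 + e) ^ 2.

Lemma Om_open e a b : Om e a b -> locally_2d (Om e) a b.
Proof.
  intros H.
  set (phi := fun u v : R => (1 + e) ^ 2 - (u * u + v * v)).
  assert (Hc : continuity_2d_pt phi a b).
  { unfold phi. apply continuity_2d_pt_minus. apply continuity_2d_pt_const.
    apply continuity_2d_pt_plus; apply continuity_2d_pt_mult;
      (apply continuity_2d_pt_id1 || apply continuity_2d_pt_id2). }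
  assert (Hp : 0 < phi a b) by (unfold phi, Om in *; nra).
  destruct (Hc (mkposreal _ Hp)) as [d Hd].
  exists d. intros u v Hu Hv. specialize (Hd u v Hu Hv). simpl in Hd.
  unfold Om, phi in *. apply Rabs_lt_between in Hd. nra.
Qed.

Definition good (f : R -> R -> R) (p b : R) : Prop :=
  is_derive (fun s => f s b) p (pd1 f p b) /\
  is_derive (fun s => f p s) b (pd2 f p b) /\
  continuity_2d_pt (pd1 f) p b /\ continuity_2d_pt (pd2 f) p b /\
  differentiable_pt_lim f p b (pd1 f p b) (pd2 f p b) /\
  continuity_2d_pt f p b.

Lemma cont2_of (F : R -> R -> R) a b :
  continuous (fun p : R * R => F (fst p) (snd p)) (a, b) -> continuity_2d_pt F a b.
Proof. intros H. apply continuity_2d_pt_filterlim. exact H. Qed.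

Lemma good_of_C1 (P : R -> R -> Prop) f a b :
  C1_on2 P f -> locally_2d P a b -> good f a b.
Proof.
  intros HC HP.
  pose proof (locally_2d_singleton _ _ _ HP) as HPab.
  destruct (HC a b HPab) as (H1 & H2 & H3 & H4).
  assert (D1 : is_derive (fun s => f s b) a (pd1 f a b)).
  { unfold pd1. apply Derive_correct. exact H1. }
  assert (D2 : is_derive (fun s => f a s) b (pd2 f a b)).
  { unfold pd2. apply Derive_correct. exact H2. }
  assert (Dif : differentiable_pt_lim f a b (pd1 f a b) (pd2 f a b)).
  { apply filterdiff_differentiable_pt_lim.
    eapply filterdiff_ext_lin.
    - apply (is_derive_filterdiff f a b (pd1 f) (pd2 f a b)).
      + apply (proj1 (locally_2d_locally (fun u v => is_derive (fun z => f z v) u (pd1 f u v)) a b)).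
        apply locally_2d_impl with (2 := HP).
        apply locally_2d_forall. intros u v Puv.
        destruct (HC u v Puv) as (E1 & _). unfold pd1. apply Derive_correct. exact E1.
      + exact D2.
      + exact H3.
    - intros [y1 y2]. simpl. unfold plus, scal; simpl.
      unfold mult; simpl. ring. }
  split; [exact D1|]. split; [exact D2|].
  split; [apply cont2_of; exact H3|]. split; [apply cont2_of; exact H4|].
  split; [exact Dif|].
  apply differentiable_continuity_pt. exists (pd1 f a b), (pd2 f a b). exact Dif.
Qed.

Ltac mintac := first [ apply Rle_refl | eapply Rle_trans; [apply Rmin_l | mintac] | eapply Rle_trans; [apply Rmin_r | mintac] ].

Lemma cont_eps (f : R -> R) x : continuous f x ->
  forall eps, 0 < eps -> exists d, 0 < d /\ forall y, Rabs (y - x) < d -> Rabs (f y - f x) < eps.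
Proof.
  intros Hc eps He.
  destruct (proj1 (filterlim_locally (F := locally x) f (f x)) Hc (mkposreal _ He)) as [d Hd].
  exists d. split. apply cond_pos. intros y Hy. apply (Hd y). exact Hy.
Qed.

Lemma cont2_eps (f : R -> R -> R) x y : continuity_2d_pt f x y ->
  forall eps, 0 < eps -> exists d, 0 < d /\ forall u v, Rabs (u - x) < d -> Rabs (v - y) < d -> Rabs (f u v - f x y) < eps.
Proof.
  intros Hc eps He. destruct (Hc (mkposreal _ He)) as [d Hd].
  exists d. split. apply cond_pos. intros u v Hu Hv. apply (Hd u v Hu Hv).
Qed.

Lemma RInt_minus_R (f g : R -> R) a b : ex_RInt f a b -> ex_RInt g a b ->
  RInt (fun x => f x - g x) a b = RInt f a b - RInt g a b.
Proof. intros. apply (RInt_minus f g a b); assumption. Qed.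

Lemma RInt_plus_R (f g : R -> R) a b : ex_RInt f a b -> ex_RInt g a b ->
  RInt (fun x => f x + g x) a b = RInt f a b + RInt g a b.
Proof. intros. apply (RInt_plus f g a b); assumption. Qed.

Lemma Chasles_R (f : R -> R) a b c : ex_RInt f a b -> ex_RInt f b c ->
  RInt f a b + RInt f b c = RInt f a c.
Proof. intros. apply (RInt_Chasles f a b c); assumption. Qed.

Lemma ex_RInt_cont_seg (f : R -> R) m M :
  (forall b, m <= b <= M -> continuous f b) ->
  forall x y, m <= x <= M -> m <= y <= M -> ex_RInt f x y.
Proof.
  intros Hc x y Hx Hy. apply (ex_RInt_continuous (V := R_CompleteNormedModule)).
  intros z Hz. apply Hc. split.
  - apply Rle_trans with (2 := proj1 Hz). apply Rmin_glb; lra.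
  - apply Rle_trans with (1 := proj2 Hz). apply Rmax_lub; lra.
Qed.

Lemma RInt_correct_R (f : R -> R) a b : ex_RInt f a b -> is_RInt f a b (RInt f a b).
Proof. intros H. apply (RInt_correct (V:=R_CompleteNormedModule)). exact H. Qed.

Lemma ex_RInt_minus_R (f g : R -> R) a b : ex_RInt f a b -> ex_RInt g a b ->
  ex_RInt (fun x => f x - g x) a b.
Proof. intros. apply (ex_RInt_minus f g a b); assumption. Qed.

Lemma ex_RInt_plus_R (f g : R -> R) a b : ex_RInt f a b -> ex_RInt g a b ->
  ex_RInt (fun x => f x + g x) a b.
Proof. intros. apply (ex_RInt_plus f g a b); assumption. Qed.

Definition UCf (H : R -> R -> R -> R) p0 q0 m M : Prop :=
  forall eps, 0 < eps -> exists rho, 0 < rho /\ forall p q b,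
    Rabs (p - p0) < rho -> Rabs (q - q0) < rho -> m <= b <= M ->
    Rabs (H p q b - H p0 q0 b) < eps.

Lemma prim_cont (f : R -> R) m M x :
  (forall b, m <= b <= M -> continuous f b) -> m < x < M ->
  continuous (fun y => RInt f m y) x.
Proof.
  intros Hc Hx.
  apply (ex_derive_continuous (K:=R_AbsRing) (V:=R_NormedModule)). exists (f x).
  apply (is_derive_RInt (V:=R_NormedModule) f (fun y => RInt f m y) m x).
  - assert (Hd : 0 < Rmin (x - m) (M - x)) by (apply Rmin_glb_lt; lra).
    exists (mkposreal _ Hd). intros y Hy. apply RInt_correct_R.
    change (Rabs (y - x) < Rmin (x - m) (M - x)) in Hy.
    apply Rabs_lt_between in Hy.
    assert (Rmin (x - m) (M - x) <= x - m) by apply Rmin_l.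
    assert (Rmin (x - m) (M - x) <= M - x) by apply Rmin_r.
    apply ex_RInt_cont_seg with m M; try assumption; lra.
  - apply Hc. lra.
Qed.

Lemma param_cont (H : R -> R -> R -> R) (l r : R -> R -> R) p0 q0 m M :
  continuity_2d_pt l p0 q0 -> continuity_2d_pt r p0 q0 ->
  m < l p0 q0 < M -> m < r p0 q0 < M ->
  (exists rho, 0 < rho /\ forall p q b, Rabs (p - p0) < rho -> Rabs (q - q0) < rho ->
       m <= b <= M -> continuous (H p q) b) ->
  UCf H p0 q0 m M ->
  continuity_2d_pt (fun p q => RInt (H p q) (l p q) (r p q)) p0 q0.
Proof.
  intros Hl Hr Hl0 Hr0 [rho [Hrho Hcont]] HU eps.
  set (H0 := H p0 q0).
  assert (Hc0 : forall b, m <= b <= M -> continuous H0 b).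
  { intros b Hb. apply Hcont; try assumption; rewrite Rminus_eq_0, Rabs_R0; lra. }
  set (P := fun y => RInt H0 m y).
  set (e3 := eps / 3).
  assert (He3 : 0 < e3) by (unfold e3; destruct eps; simpl; lra).
  destruct (cont_eps P (l p0 q0) (prim_cont H0 m M _ Hc0 Hl0) e3 He3) as [d1 [Hd1 HP1]].
  destruct (cont_eps P (r p0 q0) (prim_cont H0 m M _ Hc0 Hr0) e3 He3) as [d2 [Hd2 HP2]].
  set (gap := Rmin (Rmin (l p0 q0 - m) (M - l p0 q0)) (Rmin (r p0 q0 - m) (M - r p0 q0))).
  assert (Hgap : 0 < gap).
  { unfold gap. repeat apply Rmin_glb_lt; lra. }
  assert (Hg1 : gap <= l p0 q0 - m /\ gap <= M - l p0 q0 /\ gap <= r p0 q0 - m /\ gap <= M - r p0 q0).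
  { unfold gap. repeat split;
    mintac. }
  destruct (cont2_eps l p0 q0 Hl (Rmin gap d1) ltac:(apply Rmin_glb_lt; lra)) as [d3 [Hd3 Hl3]].
  destruct (cont2_eps r p0 q0 Hr (Rmin gap d2) ltac:(apply Rmin_glb_lt; lra)) as [d4 [Hd4 Hr4]].
  set (e' := e3 / (M - m)).
  assert (He' : 0 < e') by (unfold e'; apply Rdiv_lt_0_compat; lra).
  destruct (HU e' He') as [d5 [Hd5 HU5]].
  assert (Hd : 0 < Rmin (Rmin rho d3) (Rmin d4 d5)) by (repeat apply Rmin_glb_lt; lra).
  exists (mkposreal _ Hd). intros p q Hp Hq. simpl in Hp, Hq.
  assert (Hm1 : Rmin (Rmin rho d3) (Rmin d4 d5) <= rho /\ Rmin (Rmin rho d3) (Rmin d4 d5) <= d3 /\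
     Rmin (Rmin rho d3) (Rmin d4 d5) <= d4 /\ Rmin (Rmin rho d3) (Rmin d4 d5) <= d5).
  { repeat split;
    mintac. }
  destruct Hm1 as (Hm1 & Hm2 & Hm3 & Hm4).
  assert (L1 := Hl3 p q ltac:(lra) ltac:(lra)).
  assert (R1 := Hr4 p q ltac:(lra) ltac:(lra)).
  assert (Rmin gap d1 <= gap /\ Rmin gap d1 <= d1) by (split; [apply Rmin_l|apply Rmin_r]).
  assert (Rmin gap d2 <= gap /\ Rmin gap d2 <= d2) by (split; [apply Rmin_l|apply Rmin_r]).
  set (lp := l p q) in *. set (rp := r p q) in *.
  set (l0 := l p0 q0) in *. set (r0 := r p0 q0) in *.
  assert (Hlp : m < lp < M) by (apply Rabs_lt_between in L1; lra).
  assert (Hrp : m < rp < M) by (apply Rabs_lt_between in R1; lra).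
  assert (Hcpq : forall b, m <= b <= M -> continuous (H p q) b) by (intros; apply Hcont; lra).
  assert (EX0 : forall x y, m <= x <= M -> m <= y <= M -> ex_RInt H0 x y)
    by (apply ex_RInt_cont_seg; exact Hc0).
  assert (EXpq : forall x y, m <= x <= M -> m <= y <= M -> ex_RInt (H p q) x y)
    by (apply ex_RInt_cont_seg; exact Hcpq).
  assert (E1 : @eq R (RInt (H p q) lp rp) (RInt (fun b => H p q b - H0 b) lp rp + RInt H0 lp rp)).
  { rewrite RInt_minus_R; [lra| apply EXpq; lra | apply EX0; lra]. }
  assert (E2 : @eq R (RInt H0 lp rp) (P rp - P lp)).
  { unfold P. rewrite <- (Chasles_R H0 m lp rp); [lra | apply EX0; lra | apply EX0; lra]. }
  assert (E3 : @eq R (RInt H0 l0 r0) (P r0 - P l0)).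
  { unfold P. rewrite <- (Chasles_R H0 m l0 r0); [lra | apply EX0; lra | apply EX0; lra]. }
  assert (B1 : Rabs (RInt (fun b => H p q b - H0 b) lp rp) <= Rabs (rp - lp) * e').
  { apply (norm_RInt_le_const_abs (fun b => H p q b - H0 b) lp rp).
    - intros x Hx. apply Rlt_le. apply HU5; try lra.
      assert (m <= Rmin lp rp) by (apply Rmin_glb; lra).
      assert (Rmax lp rp <= M) by (apply Rmax_lub; lra). lra.
    - apply RInt_correct_R. apply ex_RInt_minus_R; [apply EXpq|apply EX0]; lra. }
  assert (B2 : Rabs (rp - lp) * e' <= e3).
  { apply Rle_trans with ((M - m) * e').
    - apply Rmult_le_compat_r; [lra|]. apply Rabs_le. lra.
    - right. unfold e'. field. lra. }
  assert (B3 := HP1 lp ltac:(apply Rabs_lt_between in L1; apply Rabs_lt_between; lra)).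
  assert (B4 := HP2 rp ltac:(apply Rabs_lt_between in R1; apply Rabs_lt_between; lra)).
  change (Rabs (RInt (H p q) lp rp - RInt H0 l0 r0) < eps).
  rewrite E1, E2, E3.
  replace (RInt (fun b : R => H p q b - H0 b) lp rp + (P rp - P lp) - (P r0 - P l0))
    with (RInt (fun b : R => H p q b - H0 b) lp rp + (P rp - P r0) - (P lp - P l0)) by ring.
  set (Z := RInt (fun b : R => H p q b - H0 b) lp rp) in *.
  apply Rabs_lt_between in B3. apply Rabs_lt_between in B4.
  apply Rabs_le_between in B1.
  apply Rabs_lt_between. unfold e3 in *. lra.
Qed.

Lemma cont_of_eps (f : R -> R) x :
  (forall eps, 0 < eps -> exists d, 0 < d /\ forall y, Rabs (y - x) < d -> Rabs (f y - f x) < eps) ->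
  continuous f x.
Proof.
  intros H. apply (proj2 (filterlim_locally (F := locally x) f (f x))).
  intros eps. destruct (H eps (cond_pos eps)) as [d [Hd Hd']].
  exists (mkposreal _ Hd). intros y Hy. apply Hd'. exact Hy.
Qed.

Lemma cont2_y (A : R -> R -> R) x y : continuity_2d_pt A x y -> continuous (fun v => A x v) y.
Proof.
  intros H. apply cont_of_eps. intros eps He.
  destruct (cont2_eps A x y H eps He) as [d [Hd Hd']].
  exists d. split; auto. intros v Hv. apply Hd'; auto. rewrite Rminus_eq_0, Rabs_R0; lra.
Qed.

Lemma cont2_x (A : R -> R -> R) x y : continuity_2d_pt A x y -> continuous (fun u => A u y) x.
Proof.
  intros H. apply cont_of_eps. intros eps He.
  destruct (cont2_eps A x y H eps He) as [d [Hd Hd']].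
  exists d. split; auto. intros v Hv. apply Hd'; auto. rewrite Rminus_eq_0, Rabs_R0; lra.
Qed.

Lemma cont_pt_of (f : R -> R) x : continuous f x -> continuity_pt f x.
Proof. intros H. apply continuity_pt_filterlim. exact H. Qed.

Lemma bound_of_cont (g : R -> R) m M : m <= M ->
  (forall b, m <= b <= M -> continuous g b) ->
  exists B, 0 <= B /\ forall b, m <= b <= M -> Rabs (g b) <= B.
Proof.
  intros HmM Hc.
  destruct (continuity_ab_maj g m M HmM) as [x1 [Hx1 _]].
  { intros c Hc'. apply cont_pt_of. apply Hc. exact Hc'. }
  destruct (continuity_ab_min g m M HmM) as [x2 [Hx2 _]].
  { intros c Hc'. apply cont_pt_of. apply Hc. exact Hc'. }
  exists (Rabs (g x1) + Rabs (g x2)). split.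
  - pose proof (Rabs_pos (g x1)); pose proof (Rabs_pos (g x2)); lra.
  - intros b Hb. specialize (Hx1 b Hb). specialize (Hx2 b Hb).
    apply Rabs_le. split.
    + pose proof (Rle_abs (- g x2)). rewrite Rabs_Ropp in H. pose proof (Rabs_pos (g x1)). lra.
    + pose proof (Rle_abs (g x1)). pose proof (Rabs_pos (g x2)). lra.
Qed.

Lemma UCf_plus H1 H2 p0 q0 m M : UCf H1 p0 q0 m M -> UCf H2 p0 q0 m M ->
  UCf (fun p q b => H1 p q b + H2 p q b) p0 q0 m M.
Proof.
  intros U1 U2 eps He.
  destruct (U1 (eps/2) ltac:(lra)) as [d1 [Hd1 D1]].
  destruct (U2 (eps/2) ltac:(lra)) as [d2 [Hd2 D2]].
  exists (Rmin d1 d2). split. apply Rmin_glb_lt; lra.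
  intros p q b Hp Hq Hb.
  assert (Rmin d1 d2 <= d1) by apply Rmin_l. assert (Rmin d1 d2 <= d2) by apply Rmin_r.
  specialize (D1 p q b ltac:(lra) ltac:(lra) Hb). specialize (D2 p q b ltac:(lra) ltac:(lra) Hb).
  apply Rabs_lt_between in D1. apply Rabs_lt_between in D2. apply Rabs_lt_between. lra.
Qed.

Lemma UCf_opp H1 p0 q0 m M : UCf H1 p0 q0 m M ->
  UCf (fun p q b => - H1 p q b) p0 q0 m M.
Proof.
  intros U1 eps He.
  destruct (U1 eps He) as [d1 [Hd1 D1]]. exists d1. split; auto.
  intros p q b Hp Hq Hb. specialize (D1 p q b Hp Hq Hb).
  replace (- H1 p q b - - H1 p0 q0 b) with (- (H1 p q b - H1 p0 q0 b)) by ring.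
  rewrite Rabs_Ropp. exact D1.
Qed.

Lemma UCf_mult H1 H2 p0 q0 m M : m <= M -> UCf H1 p0 q0 m M -> UCf H2 p0 q0 m M ->
  (forall b, m <= b <= M -> continuous (H1 p0 q0) b) ->
  (forall b, m <= b <= M -> continuous (H2 p0 q0) b) ->
  UCf (fun p q b => H1 p q b * H2 p q b) p0 q0 m M.
Proof.
  intros HmM U1 U2 C1 C2 eps He.
  destruct (bound_of_cont _ m M HmM C1) as [B1 [HB1 B1b]].
  destruct (bound_of_cont _ m M HmM C2) as [B2 [HB2 B2b]].
  set (e1 := Rmin 1 (eps / (2 * (B2 + 1)))).
  set (e2 := Rmin 1 (eps / (2 * (B1 + 1)))).
  assert (He1 : 0 < e1) by (unfold e1; apply Rmin_glb_lt; [lra| apply Rdiv_lt_0_compat; lra]).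
  assert (He2 : 0 < e2) by (unfold e2; apply Rmin_glb_lt; [lra| apply Rdiv_lt_0_compat; lra]).
  assert (Le1 : e1 * (B2 + 1) <= eps / 2).
  { unfold e1. apply Rle_trans with ((eps / (2 * (B2 + 1))) * (B2 + 1)).
    apply Rmult_le_compat_r; [lra| apply Rmin_r]. right. field. lra. }
  assert (Le2 : e2 * (B1 + 1) <= eps / 2).
  { unfold e2. apply Rle_trans with ((eps / (2 * (B1 + 1))) * (B1 + 1)).
    apply Rmult_le_compat_r; [lra| apply Rmin_r]. right. field. lra. }
  assert (e2 <= 1) by (unfold e2; apply Rmin_l).
  destruct (U1 e1 He1) as [d1 [Hd1 D1]].
  destruct (U2 e2 He2) as [d2 [Hd2 D2]].
  exists (Rmin d1 d2). split. apply Rmin_glb_lt; lra.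
  intros p q b Hp Hq Hb.
  assert (Rmin d1 d2 <= d1) by apply Rmin_l. assert (Rmin d1 d2 <= d2) by apply Rmin_r.
  specialize (D1 p q b ltac:(lra) ltac:(lra) Hb). specialize (D2 p q b ltac:(lra) ltac:(lra) Hb).
  specialize (B1b b Hb). specialize (B2b b Hb).
  replace (H1 p q b * H2 p q b - H1 p0 q0 b * H2 p0 q0 b) with
    ((H1 p q b - H1 p0 q0 b) * H2 p q b + H1 p0 q0 b * (H2 p q b - H2 p0 q0 b)) by ring.
  eapply Rle_lt_trans. apply Rabs_triang. rewrite !Rabs_mult.
  assert (Rabs (H2 p q b) <= B2 + 1).
  { replace (H2 p q b) with (H2 p0 q0 b + (H2 p q b - H2 p0 q0 b)) by ring.
    eapply Rle_trans. apply Rabs_triang. lra. }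
  assert (Rabs (H1 p q b - H1 p0 q0 b) * Rabs (H2 p q b) <= e1 * (B2 + 1)).
  { apply Rmult_le_compat; try apply Rabs_pos; lra. }
  assert (Rabs (H1 p0 q0 b) * Rabs (H2 p q b - H2 p0 q0 b) < (B1 + 1) * e2).
  { apply Rle_lt_trans with (B1 * Rabs (H2 p q b - H2 p0 q0 b)).
    apply Rmult_le_compat_r; [apply Rabs_pos| lra].
    pose proof (Rabs_pos (H2 p q b - H2 p0 q0 b)). nra. }
  lra.
Qed.

Lemma UCf_A1 (A : R -> R -> R) p0 q0 m M : m <= M ->
  (forall b, m <= b <= M -> continuity_2d_pt A p0 b) ->
  UCf (fun p q b => A p b) p0 q0 m M.
Proof.
  intros HmM Hc eps He.
  destruct (uniform_continuity_2d_1d' A m M p0 Hc (mkposreal _ He)) as [d Hd].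
  pose proof (cond_pos d). exists d. split. apply cond_pos. intros p q b Hp Hq Hb.
  apply (Hd b p0 b p Hb ltac:(split; lra) Hb).
  apply Rabs_lt_between in Hp. split; lra.
  rewrite Rminus_eq_0, Rabs_R0. apply cond_pos.
Qed.

Lemma UCf_A2 (A : R -> R -> R) p0 q0 m M : m <= M ->
  (forall b, m <= b <= M -> continuity_2d_pt A q0 b) ->
  UCf (fun p q b => A q b) p0 q0 m M.
Proof.
  intros HmM Hc eps He.
  destruct (uniform_continuity_2d_1d' A m M q0 Hc (mkposreal _ He)) as [d Hd].
  pose proof (cond_pos d). exists d. split. apply cond_pos. intros p q b Hp Hq Hb.
  apply (Hd b q0 b q Hb ltac:(split; lra) Hb).
  apply Rabs_lt_between in Hq. split; lra.
  rewrite Rminus_eq_0, Rabs_R0. apply cond_pos.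
Qed.

Lemma UCf_const (C : R -> R) p0 q0 m M : UCf (fun p q b => C b) p0 q0 m M.
Proof.
  intros eps He. exists 1. split. lra. intros. rewrite Rminus_eq_0, Rabs_R0. exact He.
Qed.

Lemma Rmin_shift a b e : Rmin (a - e) (b - e) = Rmin a b - e.
Proof. unfold Rmin. destruct (Rle_dec (a - e) (b - e)), (Rle_dec a b); lra. Qed.
Lemma Rmax_shift a b e : Rmax (a + e) (b + e) = Rmax a b + e.
Proof. unfold Rmax. destruct (Rle_dec (a + e) (b + e)), (Rle_dec a b); lra. Qed.

Lemma param_deriv (F dF : R -> R -> R) (l r : R -> R) x dl dr d :
  0 < d ->
  (forall u t, Rabs (u - x) < d -> Rmin (l x) (r x) - d < t < Rmax (l x) (r x) + d ->
     is_derive (fun s => F s t) u (dF u t) /\ continuity_2d_pt dF u t /\ continuity_2d_pt F u t) ->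
  is_derive l x dl -> is_derive r x dr ->
  is_derive (fun y => RInt (F y) (l y) (r y)) x
    (RInt (dF x) (l x) (r x) - F x (l x) * dl + F x (r x) * dr).
Proof.
  intros Hd HB Hl Hr.
  set (lo := Rmin (l x) (r x)) in *. set (hi := Rmax (l x) (r x)) in *.
  assert (Hlo : lo <= l x /\ lo <= r x) by (split; [apply Rmin_l|apply Rmin_r]).
  assert (Hhi : l x <= hi /\ r x <= hi) by (split; [apply Rmax_l|apply Rmax_r]).
  assert (Hd2 : 0 < d / 2) by lra.
  assert (DE : forall u t, Rabs (u - x) < d / 2 -> lo - d / 2 < t < hi + d / 2 ->
     locally_2d (fun u' t' => Derive (fun z => F z t') u' = dF u' t') u t).
  { intros u t Hu Ht. exists (mkposreal _ Hd2). intros u' t' Hu' Ht'. simpl in Hu', Ht'.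
    apply is_derive_unique. apply (HB u' t').
    - apply Rabs_lt_between in Hu. apply Rabs_lt_between in Hu'. apply Rabs_lt_between. lra.
    - apply Rabs_lt_between in Ht'. lra. }
  assert (CD : forall u t, Rabs (u - x) < d / 2 -> lo - d / 2 < t < hi + d / 2 ->
     continuity_2d_pt (fun u' v => Derive (fun z => F z v) u') u t).
  { intros u t Hu Ht. eapply continuity_2d_pt_ext_loc.
    - apply locally_2d_impl with (2 := DE u t Hu Ht). apply locally_2d_forall.
      intros u' t' E. symmetry. exact E.
    - apply (HB u t). lra. lra. }
  assert (EXR : forall y a b, Rabs (y - x) < d -> lo - d < a < hi + d -> lo - d < b < hi + d ->
     ex_RInt (F y) a b).
  { intros y a b Hy Ha Hb. apply (ex_RInt_continuous (V:=R_CompleteNormedModule)).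
    intros z Hz. apply cont2_y. apply (HB y z Hy).
    assert (lo - d < Rmin a b) by (apply Rmin_glb_lt; lra).
    assert (Rmax a b < hi + d) by (apply Rmax_lub_lt; lra). lra. }
  assert (HDer : is_derive (fun y => RInt (F y) (l y) (r y)) x
    (RInt (fun t => Derive (fun u => F u t) x) (l x) (r x) + - F x (l x) * dl + F x (r x) * dr)).
  { apply is_derive_RInt_param_bound_comp.
    - exists (mkposreal _ Hd). intros y Hy. apply EXR. exact Hy. lra. lra.
    - exists (mkposreal _ Hd2). exists (mkposreal _ Hd). intros y Hy. apply EXR. exact Hy.
      simpl; lra. simpl; lra.
    - exists (mkposreal _ Hd2). exists (mkposreal _ Hd). intros y Hy. apply EXR. exact Hy.
      simpl; lra. simpl; lra.
    - exact Hl.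
    - exact Hr.
    - exists (mkposreal _ Hd2). exists (mkposreal _ Hd). intros y Hy t Ht. simpl in Ht.
      rewrite Rmin_shift, Rmax_shift in Ht. fold lo hi in Ht.
      exists (dF y t). apply (HB y t Hy). lra.
    - intros t Ht. apply CD. rewrite Rminus_eq_0, Rabs_R0; lra. fold lo hi in Ht. lra.
    - exists (mkposreal _ Hd2). intros u v Hu Hv. simpl in Hu, Hv. apply CD. exact Hu.
      apply Rabs_lt_between in Hv. lra.
    - exists (mkposreal _ Hd2). intros u v Hu Hv. simpl in Hu, Hv. apply CD. exact Hu.
      apply Rabs_lt_between in Hv. lra.
    - apply cont_pt_of. apply cont2_y. apply (HB x (l x)). rewrite Rminus_eq_0, Rabs_R0; lra. lra.
    - apply cont_pt_of. apply cont2_y. apply (HB x (r x)). rewrite Rminus_eq_0, Rabs_R0; lra. lra. }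
  replace (RInt (dF x) (l x) (r x) - F x (l x) * dl + F x (r x) * dr) with
    (RInt (fun t => Derive (fun u => F u t) x) (l x) (r x) + - F x (l x) * dl + F x (r x) * dr).
  exact HDer.
  assert (E : RInt (fun t => Derive (fun u => F u t) x) (l x) (r x) = RInt (dF x) (l x) (r x)).
  { apply RInt_ext. intros t Ht. apply is_derive_unique. apply (HB x t).
    rewrite Rminus_eq_0, Rabs_R0; lra. fold lo hi in Ht. lra. }
  rewrite E. ring.
Qed.

Definition hh (a : R) : R := sqrt (1 - a ^ 2).

Lemma hh_nonneg a : 0 <= hh a.
Proof. apply sqrt_pos. Qed.

Lemma hh_sq a : -1 <= a <= 1 -> hh a ^ 2 = 1 - a ^ 2.
Proof. intros H. unfold hh. rewrite pow2_sqrt. ring. nra. Qed.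

Lemma hh_le1 a : hh a <= 1.
Proof.
  unfold hh. apply Rle_trans with (sqrt 1); [apply sqrt_le_1_alt; nra | rewrite sqrt_1; lra].
Qed.

Lemma hh_pos a : -1 < a < 1 -> 0 < hh a.
Proof. intros H. unfold hh. apply sqrt_lt_R0. nra. Qed.

Lemma hh_cont a : continuous hh a.
Proof.
  unfold hh. apply continuous_sqrt_comp. apply (continuous_minus (V:=R_NormedModule)).
  apply continuous_const. apply ex_derive_continuous. auto_derive. auto.
Qed.

Definition dhh (a : R) : R := - a / hh a.

Lemma hh_deriv a : -1 < a < 1 -> is_derive hh a (dhh a).
Proof.
  intros H. unfold dhh, hh. pose proof (hh_pos a H) as Hp. unfold hh in Hp.
  assert (0 < 1 - a^2) by nra.
  replace (- a / sqrt (1 - a ^ 2)) with ((- (2 * a)) / (2 * sqrt (1 - a^2))) by (field; lra).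
  apply (is_derive_sqrt (fun x => 1 - x^2) a (-(2*a))). auto_derive. auto. ring. exact H0.
Qed.

Lemma dhh_cont a : -1 < a < 1 -> continuous dhh a.
Proof.
  intros H. unfold dhh. pose proof (hh_pos a H).
  apply continuity_pt_filterlim.
  apply continuity_pt_div. apply continuity_pt_opp. apply continuity_pt_id.
  apply cont_pt_of, hh_cont. lra.
Qed.

Definition dd (e : R) : R := Rmin (e / 8) (1 / 2).

Lemma dd_pos e : 0 < e -> 0 < dd e.
Proof. intros. unfold dd. apply Rmin_glb_lt; lra. Qed.

Lemma box e a p b : 0 < e -> -1 <= a <= 1 -> Rabs (p - a) < 2 * dd e -> Rabs b < hh a + 2 * dd e ->
  Om e p b.
Proof.
  intros He Ha Hp Hb. unfold Om.
  assert (D1 : dd e <= e / 8) by apply Rmin_l. assert (D2 : dd e <= 1 / 2) by apply Rmin_r.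
  pose proof (dd_pos e He).
  pose proof (hh_sq a Ha). pose proof (hh_nonneg a). pose proof (hh_le1 a).
  assert (Hp' : Rabs p < Rabs a + 2 * dd e).
  { replace p with (a + (p - a)) by ring. eapply Rle_lt_trans. apply Rabs_triang. lra. }
  assert (Ha' : Rabs a <= 1) by (apply Rabs_le; lra).
  pose proof (pow2_abs p).
  pose proof (pow2_abs b).
  pose proof (pow2_abs a).
  pose proof (Rabs_pos p). pose proof (Rabs_pos b). pose proof (Rabs_pos a).
  assert (Rabs p ^ 2 <= (Rabs a + 2 * dd e) ^ 2) by nra.
  assert (Rabs b ^ 2 <= (hh a + 2 * dd e) ^ 2) by nra.
  nra.
Qed.

Lemma is_derive_mult_R (f g : R -> R) x df dg : is_derive f x df -> is_derive g x dg ->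
  is_derive (fun y => f y * g y) x (df * g x + f x * dg).
Proof. intros. apply (is_derive_mult f g x df dg); auto. intros; apply Rmult_comm. Qed.

Lemma is_derive_comp_R (f g : R -> R) x df dg : is_derive f (g x) df -> is_derive g x dg ->
  is_derive (fun y => f (g y)) x (df * dg).
Proof. intros H1 H2. rewrite Rmult_comm. apply (is_derive_comp f g x df dg H1 H2). Qed.

Lemma chain2 (G : R -> R -> R) (phi psi : R -> R) t dphi dpsi lx ly :
  differentiable_pt_lim G (phi t) (psi t) lx ly -> is_derive phi t dphi -> is_derive psi t dpsi ->
  is_derive (fun s => G (phi s) (psi s)) t (lx * dphi + ly * dpsi).
Proof.
  intros HG H1 H2. apply is_derive_Reals. apply derivable_pt_lim_comp_2d; auto;
  apply is_derive_Reals; auto.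
Qed.

Lemma cont2_const_x (A : R -> R) u t : continuous A t -> continuity_2d_pt (fun _ v => A v) u t.
Proof.
  intros H eps. destruct (cont_eps A t H eps (cond_pos eps)) as [d [Hd Hd']].
  exists (mkposreal _ Hd). intros u' v Hu Hv. apply Hd'. exact Hv.
Qed.

Lemma cont2_const_y (A : R -> R) u t : continuous A u -> continuity_2d_pt (fun v _ => A v) u t.
Proof.
  intros H eps. destruct (cont_eps A u H eps (cond_pos eps)) as [d [Hd Hd']].
  exists (mkposreal _ Hd). intros u' v Hu Hv. apply Hd'. exact Hu.
Qed.

Lemma Rmin_nx x : 0 <= x -> Rmin (- x) x = - x.
Proof. intros. unfold Rmin. destruct (Rle_dec (-x) x); lra. Qed.
Lemma Rmax_nx x : 0 <= x -> Rmax (- x) x = x.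
Proof. intros. unfold Rmax. destruct (Rle_dec (-x) x); lra. Qed.

Lemma cont_mult_R (A B : R -> R) x : continuous A x -> continuous B x ->
  continuous (fun y => A y * B y) x.
Proof.
  intros HA HB. apply continuity_pt_filterlim. apply continuity_pt_mult; apply cont_pt_of; auto.
Qed.

Lemma is_derive_const_R (c x : R) : is_derive (fun _ => c) x 0.
Proof. exact (is_derive_const (K:=R_AbsRing) (V:=R_NormedModule) c x). Qed.

Lemma is_derive_scal_r_R (F : R -> R) x df c : is_derive F x df ->
  is_derive (fun y => F y * c) x (df * c).
Proof.
  intros H. replace (df * c) with (df * c + F x * 0) by ring.
  apply is_derive_mult_R. exact H. apply is_derive_const_R.
Qed.

Lemma is_derive_scal_l_R (F : R -> R) x df c : is_derive F x df ->
  is_derive (fun y => c * F y) x (c * df).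
Proof.
  intros H. replace (c * df) with (0 * F x + c * df) by ring.
  apply is_derive_mult_R. apply is_derive_const_R. exact H.
Qed.

Lemma ibp (F G dF dG : R -> R) l r :
  (forall t, Rmin l r <= t <= Rmax l r -> is_derive F t (dF t) /\ is_derive G t (dG t) /\
      continuous dF t /\ continuous dG t) ->
  RInt (fun t => F t * dG t) l r = F r * G r - F l * G l - RInt (fun t => dF t * G t) l r.
Proof.
  intros H.
  assert (HI := is_RInt_scal_derive (V:=R_CompleteNormedModule) F G dF dG l r
    ltac:(intros; apply H; auto) ltac:(intros; apply H; auto)
    ltac:(intros; apply H; auto) ltac:(intros; apply H; auto)).
  assert (C : forall t, Rmin l r <= t <= Rmax l r -> continuous F t /\ continuous G t).
  { intros t Ht. destruct (H t Ht) as (H1 & H2 & _). split;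
    apply (ex_derive_continuous (K:=R_AbsRing) (V:=R_NormedModule)); eexists; eauto. }
  assert (E1 : ex_RInt (fun t => F t * dG t) l r).
  { apply (ex_RInt_continuous (V:=R_CompleteNormedModule)). intros t Ht.
    apply cont_mult_R; apply C || apply H; auto. }
  assert (E2 : ex_RInt (fun t => dF t * G t) l r).
  { apply (ex_RInt_continuous (V:=R_CompleteNormedModule)). intros t Ht.
    apply cont_mult_R; [apply H| apply C]; auto. }
  apply is_RInt_unique in HI.
  assert (E3 : RInt (fun t => dF t * G t + F t * dG t) l r = RInt (fun t => dF t * G t) l r + RInt (fun t => F t * dG t) l r).
  { apply RInt_plus_R; auto. }
  change (RInt (fun t => dF t * G t + F t * dG t) l r = F r * G r - F l * G l) in HI.
  lra.
Qed.

Section Green.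
Variables (e : R) (f g : R -> R -> R).
Hypothesis He : 0 < e.
Hypothesis Hf : forall p b, Om e p b -> good f p b.
Hypothesis Hg : forall p b, Om e p b -> good g p b.

Lemma goodbox a u t : -1 <= a <= 1 -> Rabs (u - a) < 2 * dd e -> Rabs t < hh a + 2 * dd e ->
  good f u t /\ good g u t.
Proof. intros. split; [apply Hf|apply Hg]; apply box with a; auto. Qed.

Definition Th (p q : R) := RInt (fun b => f p b * pd2 g q b) (- hh q) (hh q).
Definition dTh (p q : R) := RInt (fun b => pd1 f p b * pd2 g q b) (- hh q) (hh q).

Lemma Th_d1 a p q : -1 <= a <= 1 -> Rabs (p - a) < dd e -> Rabs (q - a) < dd e ->
  Rabs (hh q - hh a) < dd e -> is_derive (fun z => Th z q) p (dTh p q).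
Proof.
  intros Ha Hp Hq Hh. pose proof (dd_pos e He) as Hd.
  assert (HD := param_deriv (fun s t => f s t * pd2 g q t) (fun s t => pd1 f s t * pd2 g q t)
    (fun _ => - hh q) (fun _ => hh q) p 0 0 (dd e) Hd).
  unfold Th, dTh.
  replace (RInt (fun b => pd1 f p b * pd2 g q b) (- hh q) (hh q)) with
    (RInt ((fun s t => pd1 f s t * pd2 g q t) p) (- hh q) (hh q) - (f p (- hh q) * pd2 g q (- hh q)) * 0
     + (f p (hh q) * pd2 g q (hh q)) * 0) by ring.
  apply HD; [| apply is_derive_const_R | apply is_derive_const_R].
  intros u t Hu Ht. cbv beta in Ht. rewrite (Rmin_nx (hh q) (hh_nonneg q)), (Rmax_nx (hh q) (hh_nonneg q)) in Ht.
  assert (Hua : Rabs (u - a) < 2 * dd e).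
  { apply Rabs_lt_between in Hu. apply Rabs_lt_between in Hp. apply Rabs_lt_between. lra. }
  assert (Hta : Rabs t < hh a + 2 * dd e).
  { apply Rabs_lt_between in Hh. apply Rabs_lt_between. lra. }
  assert (Hqa : Rabs (q - a) < 2 * dd e) by lra.
  destruct (goodbox a u t Ha Hua Hta) as [Gf _].
  destruct (goodbox a q t Ha Hqa Hta) as [_ Gg].
  destruct Gf as (F1 & F2 & F3 & F4 & F5 & F6).
  destruct Gg as (G1 & G2 & G3 & G4 & G5 & G6).
  split; [| split].
  - apply is_derive_scal_r_R. exact F1.
  - apply continuity_2d_pt_mult. exact F3. apply cont2_const_x. apply cont2_y. exact G4.
  - apply continuity_2d_pt_mult. exact F6. apply cont2_const_x. apply cont2_y. exact G4.
Qed.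

Lemma cont_opp_R (A : R -> R) x : continuous A x -> continuous (fun y => - A y) x.
Proof. intros H. apply continuity_pt_filterlim. apply continuity_pt_opp. apply cont_pt_of. auto. Qed.

Lemma prod_cont a (A B : R -> R -> R) p q b :
  -1 <= a <= 1 -> Rabs (p - a) < 2 * dd e -> Rabs (q - a) < 2 * dd e -> Rabs b < hh a + 2 * dd e ->
  (forall u t, good f u t /\ good g u t -> continuity_2d_pt A u t /\ continuity_2d_pt B u t) ->
  continuous (fun b => A p b * B q b) b.
Proof.
  intros Ha Hp Hq Hb HAB.
  apply cont_mult_R; apply cont2_y.
  apply (HAB p b (goodbox a p b Ha Hp Hb)).
  apply (HAB q b (goodbox a q b Ha Hq Hb)).
Qed.

Lemma param_cont_prod a (A B : R -> R -> R) :
  -1 <= a <= 1 ->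
  (forall u t, good f u t /\ good g u t -> continuity_2d_pt A u t /\ continuity_2d_pt B u t) ->
  continuity_2d_pt (fun p q => RInt (fun b => A p b * B q b) (- hh q) (hh q)) a a.
Proof.
  intros Ha HAB. pose proof (dd_pos e He) as Hd. pose proof (hh_nonneg a).
  set (m := - hh a - dd e). set (M := hh a + dd e).
  assert (Hb : forall b, m <= b <= M -> Rabs b < hh a + 2 * dd e).
  { intros b Hb. unfold m, M in Hb. apply Rabs_lt_between. lra. }
  assert (H0 : Rabs (a - a) < 2 * dd e) by (rewrite Rminus_eq_0, Rabs_R0; lra).
  apply (param_cont (fun p q b => A p b * B q b) (fun p q => - hh q) (fun p q => hh q) a a m M).
  - apply cont2_const_x. apply cont_opp_R. apply hh_cont.
  - apply cont2_const_x. apply hh_cont.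
  - unfold m, M; lra.
  - unfold m, M; lra.
  - exists (dd e). split. exact Hd. intros p q b Hp Hq Hb'.
    apply (prod_cont a); auto; lra.
  - apply UCf_mult. unfold m, M; lra.
    + apply UCf_A1. unfold m, M; lra. intros b Hb'. apply (HAB a b (goodbox a a b Ha H0 (Hb b Hb'))).
    + apply UCf_A2. unfold m, M; lra. intros b Hb'. apply (HAB a b (goodbox a a b Ha H0 (Hb b Hb'))).
    + intros b Hb'. apply cont2_y. apply (HAB a b (goodbox a a b Ha H0 (Hb b Hb'))).
    + intros b Hb'. apply cont2_y. apply (HAB a b (goodbox a a b Ha H0 (Hb b Hb'))).
Qed.

Lemma dTh_cont a : -1 <= a <= 1 -> continuity_2d_pt dTh a a.
Proof.
  intros Ha. apply (param_cont_prod a (pd1 f) (pd2 g) Ha).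
  intros u t [[_ [_ [F3 _]]] [_ [_ [_ [G4 _]]]]]. auto.
Qed.

Lemma is_derive_minus_R (A B : R -> R) x dA dB : is_derive A x dA -> is_derive B x dB ->
  is_derive (fun y => A y - B y) x (dA - dB).
Proof. intros. apply (is_derive_minus A B x dA dB); auto. Qed.

Lemma is_derive_plus_R (A B : R -> R) x dA dB : is_derive A x dA -> is_derive B x dB ->
  is_derive (fun y => A y + B y) x (dA + dB).
Proof. intros. apply (is_derive_plus A B x dA dB); auto. Qed.

Lemma is_derive_opp_R (A : R -> R) x dA : is_derive A x dA -> is_derive (fun y => - A y) x (- dA).
Proof. intros. apply (is_derive_opp A x dA); auto. Qed.

Lemma is_derive_id_R x : is_derive (fun y : R => y) x 1.
Proof. apply (is_derive_id (K:=R_AbsRing)). Qed.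

Definition Jq (a q : R) := RInt (fun t => pd2 f a t * g q t) (- hh q) (hh q).
Definition Bq (a q : R) := f a (hh q) * g q (hh q) - f a (- hh q) * g q (- hh q).

Lemma hh_near a : exists rho, 0 < rho /\ rho <= dd e /\ forall q, Rabs (q - a) < rho -> Rabs (hh q - hh a) < dd e.
Proof.
  destruct (cont_eps hh a (hh_cont a) (dd e) (dd_pos e He)) as [r [Hr Hr']].
  exists (Rmin r (dd e)). split. apply Rmin_glb_lt; auto. apply dd_pos; auto.
  split. apply Rmin_r. intros q Hq. apply Hr'. eapply Rlt_le_trans. exact Hq. apply Rmin_l.
Qed.

Lemma Th_split a q : -1 <= a <= 1 -> Rabs (q - a) < dd e -> Rabs (hh q - hh a) < dd e ->
  Th a q = Bq a q - Jq a q.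
Proof.
  intros Ha Hq Hh. pose proof (dd_pos e He). unfold Th, Bq, Jq.
  rewrite (ibp (f a) (g q) (pd2 f a) (pd2 g q)). lra.
  intros t Ht. rewrite (Rmin_nx (hh q) (hh_nonneg q)), (Rmax_nx (hh q) (hh_nonneg q)) in Ht.
  assert (Hta : Rabs t < hh a + 2 * dd e).
  { apply Rabs_lt_between in Hh. apply Rabs_lt_between. lra. }
  assert (H0 : Rabs (a - a) < 2 * dd e) by (rewrite Rminus_eq_0, Rabs_R0; lra).
  destruct (goodbox a a t Ha H0 Hta) as [Gf _].
  destruct (goodbox a q t Ha ltac:(lra) Hta) as [_ Gg].
  destruct Gf as (F1 & F2 & F3 & F4 & F5 & F6).
  destruct Gg as (G1 & G2 & G3 & G4 & G5 & G6).
  split; [exact F2|]. split; [exact G2|]. split; apply cont2_y; assumption.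
Qed.

Definition dJ (a : R) := RInt (fun t => pd2 f a t * pd1 g a t) (- hh a) (hh a)
   - (pd2 f a (- hh a) * g a (- hh a)) * (- dhh a) + (pd2 f a (hh a) * g a (hh a)) * dhh a.

Lemma Jq_deriv a : -1 < a < 1 -> is_derive (fun q => Jq a q) a (dJ a).
Proof.
  intros Ha. pose proof (dd_pos e He) as Hd. unfold Jq, dJ.
  apply (param_deriv (fun s t => pd2 f a t * g s t) (fun s t => pd2 f a t * pd1 g s t)
    (fun q => - hh q) hh a (- dhh a) (dhh a) (dd e) Hd).
  - intros u t Hu Ht. cbv beta in Ht.
    rewrite (Rmin_nx (hh a) (hh_nonneg a)), (Rmax_nx (hh a) (hh_nonneg a)) in Ht.
    assert (Hta : Rabs t < hh a + 2 * dd e) by (apply Rabs_lt_between; lra).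
    assert (H0 : Rabs (a - a) < 2 * dd e) by (rewrite Rminus_eq_0, Rabs_R0; lra).
    destruct (goodbox a a t ltac:(lra) H0 Hta) as [Gf _].
    destruct (goodbox a u t ltac:(lra) ltac:(lra) Hta) as [_ Gg].
    destruct Gf as (F1 & F2 & F3 & F4 & F5 & F6).
    destruct Gg as (G1 & G2 & G3 & G4 & G5 & G6).
    split; [|split].
    + apply is_derive_scal_l_R. exact G1.
    + apply continuity_2d_pt_mult. apply cont2_const_x. apply cont2_y. exact F4. exact G3.
    + apply continuity_2d_pt_mult. apply cont2_const_x. apply cont2_y. exact F4. exact G6.
  - apply is_derive_opp_R. apply hh_deriv. exact Ha.
  - apply hh_deriv. exact Ha.
Qed.

Definition dB (a : R) :=
  (pd2 f a (hh a) * dhh a) * g a (hh a) + f a (hh a) * (pd1 g a (hh a) * 1 + pd2 g a (hh a) * dhh a)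
  - ((pd2 f a (- hh a) * (- dhh a)) * g a (- hh a) + f a (- hh a) * (pd1 g a (- hh a) * 1 + pd2 g a (- hh a) * (- dhh a))).

Lemma Bq_deriv a : -1 < a < 1 -> is_derive (fun q => Bq a q) a (dB a).
Proof.
  intros Ha. pose proof (dd_pos e He) as Hd. unfold Bq, dB.
  assert (H0 : Rabs (a - a) < 2 * dd e) by (rewrite Rminus_eq_0, Rabs_R0; lra).
  pose proof (hh_nonneg a).
  assert (Hp : Rabs (hh a) < hh a + 2 * dd e) by (rewrite Rabs_right; lra).
  assert (Hm : Rabs (- hh a) < hh a + 2 * dd e) by (rewrite Rabs_Ropp, Rabs_right; lra).
  destruct (goodbox a a (hh a) ltac:(lra) H0 Hp) as [Gfp Ggp].
  destruct (goodbox a a (- hh a) ltac:(lra) H0 Hm) as [Gfm Ggm].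
  apply (is_derive_minus_R (fun q => f a (hh q) * g q (hh q)) (fun q => f a (- hh q) * g q (- hh q)));
  apply (is_derive_mult_R (fun q => f a _) (fun q => g q _)).
  - apply (is_derive_comp_R (fun s => f a s) hh a). apply Gfp. apply hh_deriv; auto.
  - apply (chain2 g (fun y => y) hh a). apply Ggp. apply is_derive_id_R. apply hh_deriv; auto.
  - apply (is_derive_comp_R (fun s => f a s) (fun y => - hh y) a). apply Gfm.
    apply is_derive_opp_R. apply hh_deriv; auto.
  - apply (chain2 g (fun y => y) (fun y => - hh y) a). apply Ggm. apply is_derive_id_R.
    apply is_derive_opp_R. apply hh_deriv; auto.
Qed.

Lemma Th_d2 a : -1 < a < 1 -> is_derive (fun q => Th a q) a (dB a - dJ a).
Proof.
  intros Ha. destruct (hh_near a) as [rho [Hr [Hr' Hh]]].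
  apply (is_derive_ext_loc (fun q => Bq a q - Jq a q)).
  - exists (mkposreal _ Hr). intros q Hq. simpl in Hq. symmetry. apply Th_split. lra.
    change (Rabs (q - a) < rho) in Hq. lra. apply Hh. exact Hq.
  - apply is_derive_minus_R. apply Bq_deriv; auto. apply Jq_deriv; auto.
Qed.

Definition Ij (a : R) := RInt (fun b => jac f g a b) (- hh a) (hh a).
Definition Bd (a : R) := f a (hh a) * (pd1 g a (hh a) + pd2 g a (hh a) * dhh a)
  - f a (- hh a) * (pd1 g a (- hh a) + pd2 g a (- hh a) * (- dhh a)).

Lemma Lam_deriv a : -1 < a < 1 -> is_derive (fun s => Th s s) a (Ij a + Bd a).
Proof.
  intros Ha. pose proof (dd_pos e He) as Hd.
  destruct (hh_near a) as [rho [Hr [Hr' Hh]]].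
  assert (Dif : differentiable_pt_lim Th a a (dTh a a) (dB a - dJ a)).
  { apply filterdiff_differentiable_pt_lim. eapply filterdiff_ext_lin.
    - apply (is_derive_filterdiff Th a a dTh (dB a - dJ a)).
      + apply (proj1 (locally_2d_locally (fun p q => is_derive (fun z => Th z q) p (dTh p q)) a a)).
        exists (mkposreal _ Hr). intros p q Hp Hq. simpl in Hp, Hq.
        apply (Th_d1 a). lra. lra. lra. apply Hh. exact Hq.
      + apply Th_d2. exact Ha.
      + apply (continuity_2d_pt_filterlim dTh a a). apply dTh_cont. lra.
    - intros [y1 y2]. simpl. unfold plus, scal; simpl. unfold mult; simpl. ring. }
  assert (HD := chain2 Th (fun y => y) (fun y => y) a 1 1 (dTh a a) (dB a - dJ a) Dif
     (is_derive_id_R a) (is_derive_id_R a)).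
  assert (E : @eq R (dTh a a * 1 + (dB a - dJ a) * 1) (Ij a + Bd a)).
  { assert (H0 : Rabs (a - a) < 2 * dd e) by (rewrite Rminus_eq_0, Rabs_R0; lra).
    pose proof (hh_nonneg a).
    assert (Hb : forall t, Rmin (- hh a) (hh a) <= t <= Rmax (- hh a) (hh a) -> Rabs t < hh a + 2 * dd e).
    { intros t Ht. rewrite (Rmin_nx (hh a) (hh_nonneg a)), (Rmax_nx (hh a) (hh_nonneg a)) in Ht.
      apply Rabs_lt_between. lra. }
    assert (Ej : @eq R (Ij a) (dTh a a - RInt (fun t => pd2 f a t * pd1 g a t) (- hh a) (hh a))).
    { unfold Ij, dTh, jac. apply RInt_minus_R.
      - apply (ex_RInt_continuous (V:=R_CompleteNormedModule)). intros t Ht.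
        apply (prod_cont a (pd1 f) (pd2 g)); auto. lra.
        intros u v [[_ [_ [F3 _]]] [_ [_ [_ [G4 _]]]]]. auto.
      - apply (ex_RInt_continuous (V:=R_CompleteNormedModule)). intros t Ht.
        apply (prod_cont a (pd2 f) (pd1 g)); auto. lra.
        intros u v [[_ [_ [_ [F4 _]]]] [_ [_ [G3 _]]]]. auto. }
    rewrite Ej. unfold dB, dJ, Bd. ring. }
  rewrite <- E. exact HD.
Qed.

End Green.

Lemma diag_cont (F : R -> R -> R) a : continuity_2d_pt F a a -> continuous (fun s => F s s) a.
Proof.
  intros H. apply cont_of_eps. intros eps He.
  destruct (cont2_eps F a a H eps He) as [d [Hd Hd']].
  exists d. split; auto.
Qed.

Lemma comp2_cont (F : R -> R -> R) (k : R -> R) x : continuity_2d_pt F x (k x) -> continuous k x ->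
  continuous (fun s => F s (k s)) x.
Proof.
  intros HF Hk. apply cont_of_eps. intros eps He.
  destruct (cont2_eps F x (k x) HF eps He) as [d [Hd Hd']].
  destruct (cont_eps k x Hk d Hd) as [d2 [Hd2 Hd2']].
  exists (Rmin d d2). split. apply Rmin_glb_lt; auto.
  intros y Hy. apply Hd'. eapply Rlt_le_trans. exact Hy. apply Rmin_l.
  apply Hd2'. eapply Rlt_le_trans. exact Hy. apply Rmin_r.
Qed.

Lemma hh_out a : 1 < Rabs a -> locally a (fun y => hh y = 0).
Proof.
  intros H.
  assert (Hd : 0 < Rabs a - 1) by lra.
  exists (mkposreal _ Hd). intros y Hy. change (Rabs (y - a) < Rabs a - 1) in Hy.
  unfold hh. apply sqrt_neg_0.
  assert (1 < Rabs y).
  { replace a with (y + (a - y)) in Hy, H by ring.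
    pose proof (Rabs_triang y (a - y)). rewrite <- Rabs_Ropp in Hy.
    replace (- (y - (y + (a - y)))) with (a - y) in Hy by ring. lra. }
  pose proof (pow2_abs y). pose proof (Rabs_pos y). nra.
Qed.

Lemma RInt_0pt (F : R -> R) z : z = 0 -> RInt F (- z) z = 0.
Proof. intros ->. rewrite Ropp_0. apply (RInt_point (V:=R_CompleteNormedModule)). Qed.

Section S.
Variables (e : R) (f g : R -> R -> R).
Hypothesis He : 0 < e.
Hypothesis Hf : forall p b, Om e p b -> good f p b.
Hypothesis Hg : forall p b, Om e p b -> good g p b.

Definition Ppf (p q : R) := RInt (fun b => pd2 f p b * pd1 g q b) (- hh q) (hh q).

Lemma out_cont (F : R -> R) a : 1 < Rabs a -> (forall y, hh y = 0 -> F y = 0) -> continuous F a.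
Proof.
  intros H HF. apply cont_of_eps. intros eps Heps.
  destruct (hh_out a H) as [d Hd]. exists d. split. apply cond_pos.
  intros y Hy. rewrite !HF. rewrite Rminus_eq_0, Rabs_R0; auto.
  apply Hd. apply ball_center. apply Hd. exact Hy.
Qed.

Lemma Ij_eq y : Ij f g y = dTh f g y y - Ppf y y.
Proof.
  destruct (Rle_dec (Rabs y) 1) as [Ha|Ha].
  - apply Rabs_le_between in Ha. pose proof (dd_pos e He).
    assert (H0 : Rabs (y - y) < 2 * dd e) by (rewrite Rminus_eq_0, Rabs_R0; lra).
    pose proof (hh_nonneg y).
    unfold Ij, dTh, Ppf, jac. apply RInt_minus_R.
    + apply (ex_RInt_continuous (V:=R_CompleteNormedModule)). intros t Ht.
      rewrite (Rmin_nx (hh y) (hh_nonneg y)), (Rmax_nx (hh y) (hh_nonneg y)) in Ht.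
      apply (prod_cont e f g He Hf Hg y (pd1 f) (pd2 g)); auto. apply Rabs_lt_between; lra.
      intros u v [[_ [_ [F3 _]]] [_ [_ [_ [G4 _]]]]]. auto.
    + apply (ex_RInt_continuous (V:=R_CompleteNormedModule)). intros t Ht.
      rewrite (Rmin_nx (hh y) (hh_nonneg y)), (Rmax_nx (hh y) (hh_nonneg y)) in Ht.
      apply (prod_cont e f g He Hf Hg y (pd2 f) (pd1 g)); auto. apply Rabs_lt_between; lra.
      intros u v [[_ [_ [_ [F4 _]]]] [_ [_ [G3 _]]]]. auto.
  - assert (hh y = 0).
    { unfold hh. apply sqrt_neg_0. pose proof (pow2_abs y). pose proof (Rabs_pos y). nra. }
    unfold Ij, dTh, Ppf. rewrite !RInt_0pt by auto. lra.
Qed.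

Lemma Ij_cont a : continuous (Ij f g) a.
Proof.
  destruct (Rle_dec (Rabs a) 1) as [Ha|Ha].
  - apply Rabs_le_between in Ha.
    eapply continuous_ext.
    + intros y. symmetry. apply Ij_eq.
    + apply (continuous_minus (V:=R_NormedModule) (fun s => dTh f g s s) (fun s => Ppf s s)).
      * apply diag_cont. apply (dTh_cont e f g He Hf Hg); auto.
      * apply diag_cont. apply (param_cont_prod e f g He Hf Hg a (pd2 f) (pd1 g) Ha).
        intros u v [[_ [_ [_ [F4 _]]]] [_ [_ [G3 _]]]]. auto.
  - apply out_cont. lra. intros y Hy. unfold Ij. apply RInt_0pt. exact Hy.
Qed.

Lemma Lam_cont a : -1 <= a <= 1 -> continuous (fun s => Th f g s s) a.
Proof.
  intros Ha. apply diag_cont. apply (param_cont_prod e f g He Hf Hg a f (pd2 g) Ha).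
  intros u v [[_ [_ [_ [_ [_ F6]]]]] [_ [_ [_ [G4 _]]]]]. auto.
Qed.

Lemma Om_circ a k : -1 <= a <= 1 -> k ^ 2 = 1 - a ^ 2 -> Om e a k.
Proof. intros Ha Hk. unfold Om. nra. Qed.

Lemma Bd_cont a : -1 < a < 1 -> continuous (Bd f g) a.
Proof.
  intros Ha. unfold Bd.
  pose proof (hh_sq a ltac:(lra)) as Hs.
  assert (Hs' : (- hh a) ^ 2 = 1 - a ^ 2) by (rewrite <- Hs; ring).
  destruct (Hf a (hh a) (Om_circ a _ ltac:(lra) Hs)) as (_ & _ & F3 & F4 & _ & F6).
  destruct (Hg a (hh a) (Om_circ a _ ltac:(lra) Hs)) as (_ & _ & G3 & G4 & _ & G6).
  destruct (Hf a (- hh a) (Om_circ a _ ltac:(lra) Hs')) as (_ & _ & F3' & F4' & _ & F6').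
  destruct (Hg a (- hh a) (Om_circ a _ ltac:(lra) Hs')) as (_ & _ & G3' & G4' & _ & G6').
  pose proof (hh_cont a) as Ch. pose proof (dhh_cont a Ha) as Cd.
  pose proof (cont_opp_R hh a Ch) as Ch'. pose proof (cont_opp_R dhh a Cd) as Cd'.
  apply (continuous_minus (V:=R_NormedModule)); apply cont_mult_R.
  - apply (comp2_cont f hh); auto.
  - apply (continuous_plus (V:=R_NormedModule)). apply (comp2_cont (pd1 g) hh); auto.
    apply cont_mult_R; auto. apply (comp2_cont (pd2 g) hh); auto.
  - apply (comp2_cont f (fun y => - hh y)); auto.
  - apply (continuous_plus (V:=R_NormedModule)). apply (comp2_cont (pd1 g) (fun y => - hh y)); auto.
    apply cont_mult_R; auto. apply (comp2_cont (pd2 g) (fun y => - hh y)); auto.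
Qed.

End S.

Section S2.
Variables (e : R) (f g : R -> R -> R).
Hypothesis He : 0 < e.
Hypothesis Hf : forall p b, Om e p b -> good f p b.
Hypothesis Hg : forall p b, Om e p b -> good g p b.

Lemma ftc_step be : 0 < be < 1 ->
  RInt (Ij f g) (- be) be = Th f g be be - Th f g (- be) (- be) - RInt (Bd f g) (- be) be.
Proof.
  intros Hb.
  assert (Seg : forall x, Rmin (- be) be <= x <= Rmax (- be) be -> -1 < x < 1).
  { intros x Hx. rewrite Rmin_nx, Rmax_nx in Hx by lra. lra. }
  assert (HI := is_RInt_derive (V:=R_CompleteNormedModule) (fun s => Th f g s s)
    (fun a => Ij f g a + Bd f g a) (- be) be).
  assert (C1 : forall x, Rmin (- be) be <= x <= Rmax (- be) be -> continuous (Ij f g) x).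
  { intros. apply (Ij_cont e f g He Hf Hg). }
  assert (C2 : forall x, Rmin (- be) be <= x <= Rmax (- be) be -> continuous (Bd f g) x).
  { intros. apply (Bd_cont e f g He Hf Hg). apply Seg; auto. }
  specialize (HI ltac:(intros; apply (Lam_deriv e f g He Hf Hg); apply Seg; auto)).
  specialize (HI ltac:(intros; apply (continuous_plus (V:=R_NormedModule)); auto)).
  apply is_RInt_unique in HI.
  rewrite RInt_plus_R in HI.
  - change (RInt (Ij f g) (- be) be + RInt (Bd f g) (- be) be = Th f g be be - Th f g (- be) (- be)) in HI.
    lra.
  - apply (ex_RInt_continuous (V:=R_CompleteNormedModule)). auto.
  - apply (ex_RInt_continuous (V:=R_CompleteNormedModule)). auto.
Qed.

Definition cg (t : R) := cos (2 * PI * t).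
Definition dcg (t : R) := - (2 * PI) * sin (2 * PI * t).

Lemma cg_deriv t : is_derive cg t (dcg t).
Proof. unfold cg, dcg. auto_derive. auto. ring. Qed.

Lemma dcg_cont t : continuous dcg t.
Proof. apply (ex_derive_continuous (K:=R_AbsRing) (V:=R_NormedModule)). unfold dcg. auto_derive. auto. Qed.

Lemma cg_cont t : continuous cg t.
Proof. apply (ex_derive_continuous (K:=R_AbsRing) (V:=R_NormedModule)). eexists. apply cg_deriv. Qed.

Lemma subst (x1 x2 k dk : R -> R) t1 t2 :
  (forall t, 0 <= t <= 1 -> f (cos (2 * PI * t)) (sin (2 * PI * t)) = x1 t /\
                           g (cos (2 * PI * t)) (sin (2 * PI * t)) = x2 t) ->
  0 < Rmin t1 t2 -> Rmax t1 t2 < 1 ->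
  (forall t, Rmin t1 t2 <= t <= Rmax t1 t2 -> -1 < cg t < 1 /\ k (cg t) = sin (2 * PI * t)) ->
  (forall a, -1 < a < 1 -> is_derive k a (dk a) /\ continuous dk a /\ k a ^ 2 = 1 - a ^ 2) ->
  RInt (fun a => f a (k a) * (pd1 g a (k a) + pd2 g a (k a) * dk a)) (cg t1) (cg t2) =
  RInt (fun t => x1 t * Derive x2 t) t1 t2.
Proof.
  intros Hcap Hmin Hmax Hseg Hk.
  set (F := fun a => f a (k a) * (pd1 g a (k a) + pd2 g a (k a) * dk a)).
  assert (GD : forall a, -1 < a < 1 -> good f a (k a) /\ good g a (k a)).
  { intros a Ha. destruct (Hk a Ha) as (_ & _ & Hs).
    split; [apply Hf|apply Hg]; apply Om_circ; auto; lra. }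
  assert (FC : forall a, -1 < a < 1 -> continuous F a).
  { intros a Ha. destruct (Hk a Ha) as (Kd & Cd & _).
    assert (Ck : continuous k a).
    { apply (ex_derive_continuous (K:=R_AbsRing) (V:=R_NormedModule)). eexists; eauto. }
    destruct (GD a Ha) as [(_ & _ & F3 & F4 & _ & F6) (_ & _ & G3 & G4 & _ & G6)].
    unfold F. apply cont_mult_R.
    - apply (comp2_cont f k); auto.
    - apply (continuous_plus (V:=R_NormedModule)). apply (comp2_cont (pd1 g) k); auto.
      apply cont_mult_R; auto. apply (comp2_cont (pd2 g) k); auto. }
  rewrite <- (RInt_comp (V:=R_CompleteNormedModule) F cg dcg).
  - apply RInt_ext. intros t Ht.
    assert (Ht' : Rmin t1 t2 <= t <= Rmax t1 t2) by lra.
    destruct (Hseg t Ht') as [Hc Hks].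
    destruct (GD (cg t) Hc) as [_ Gg].
    destruct (Hk (cg t) Hc) as (Kd & _ & _).
    assert (D1 : is_derive (fun s => g (cg s) (k (cg s))) t
       (pd1 g (cg t) (k (cg t)) * dcg t + pd2 g (cg t) (k (cg t)) * (dk (cg t) * dcg t))).
    { apply chain2. apply Gg. apply cg_deriv. apply (is_derive_comp_R k cg t). exact Kd. apply cg_deriv. }
    assert (D2 : is_derive x2 t
       (pd1 g (cg t) (k (cg t)) * dcg t + pd2 g (cg t) (k (cg t)) * (dk (cg t) * dcg t))).
    { apply (is_derive_ext_loc (fun s => g (cg s) (k (cg s)))); auto.
      assert (Hd : 0 < Rmin (t - Rmin t1 t2) (Rmax t1 t2 - t)) by (apply Rmin_glb_lt; lra).
      exists (mkposreal _ Hd). intros s Hs. change (Rabs (s - t) < Rmin (t - Rmin t1 t2) (Rmax t1 t2 - t)) in Hs.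
      assert (Rmin (t - Rmin t1 t2) (Rmax t1 t2 - t) <= t - Rmin t1 t2) by apply Rmin_l.
      assert (Rmin (t - Rmin t1 t2) (Rmax t1 t2 - t) <= Rmax t1 t2 - t) by apply Rmin_r.
      apply Rabs_lt_between in Hs.
      destruct (Hseg s ltac:(lra)) as [_ Hks'].
      rewrite Hks'. unfold cg. apply Hcap. lra. }
    rewrite (is_derive_unique _ _ _ D2).
    unfold F. rewrite Hks.
    replace (f (cg t) (sin (2 * PI * t))) with (x1 t) by (symmetry; apply Hcap; lra).
    unfold scal; simpl; unfold mult; simpl. ring.
  - intros x Hx. apply FC. apply Hseg. exact Hx.
  - intros x Hx. split. apply cg_deriv. apply dcg_cont.
Qed.

End S2.

Lemma hh_cos th : hh (cos th) = Rabs (sin th).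
Proof.
  unfold hh. rewrite <- sqrt_Rsqr_abs. f_equal.
  pose proof (sin2_cos2 th). unfold Rsqr in *. simpl. lra.
Qed.

Lemma circ_in th : 0 < Rabs (sin th) -> -1 < cos th < 1.
Proof.
  intros H. pose proof (sin2_cos2 th). unfold Rsqr in *.
  assert (Hs : sin th <> 0) by (intro E; rewrite E, Rabs_R0 in H; lra).
  assert (0 < sin th * sin th) by (apply Rsqr_pos_lt; exact Hs).
  assert (Hc : cos th * cos th < 1) by lra.
  split.
  - destruct (Rlt_le_dec (-1) (cos th)); auto. nra.
  - destruct (Rlt_le_dec (cos th) 1); auto. nra.
Qed.

Lemma lim0 (E : R -> R) : continuous E 0 -> (forall h, 0 < h < 1/4 -> E h = 0) -> E 0 = 0.
Proof.
  intros HC HE. destruct (Req_dec (E 0) 0) as [|Hn]; auto. exfalso.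
  assert (Hp : 0 < Rabs (E 0)) by (apply Rabs_pos_lt; auto).
  destruct (cont_eps E 0 HC _ Hp) as [d [Hd Hd']].
  set (h := Rmin (d / 2) (1 / 8)).
  assert (h <= d / 2) by apply Rmin_l. assert (h <= 1/8) by apply Rmin_r.
  assert (0 < h) by (apply Rmin_glb_lt; lra).
  specialize (Hd' h ltac:(rewrite Rminus_0_r, Rabs_right; lra)).
  rewrite HE in Hd' by lra. rewrite Rminus_0_l, Rabs_Ropp in Hd'. lra.
Qed.

Definition cl (t : R) := Rmax 0 (Rmin 1 t).

Ltac dle := repeat match goal with |- context [Rle_dec ?a ?b] => destruct (Rle_dec a b) end.

Lemma cl_cont t : continuous cl t.
Proof.
  apply cont_of_eps. intros eps He. exists eps. split; auto. intros y Hy. unfold cl.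
  apply Rabs_lt_between in Hy. apply Rabs_lt_between.
  unfold Rmax, Rmin; destruct (Rle_dec 1 y), (Rle_dec 1 t); dle; lra.
Qed.

Lemma cl_in t : 0 <= cl t <= 1.
Proof. unfold cl, Rmax, Rmin; destruct (Rle_dec 1 t); dle; lra. Qed.

Lemma cl_id t : 0 <= t <= 1 -> cl t = t.
Proof. intros. unfold cl, Rmax, Rmin; destruct (Rle_dec 1 t); dle; lra. Qed.

Lemma clamp_cont (F : R -> R) t : (forall s, 0 <= s <= 1 -> continuous F s) -> continuous (fun s => F (cl s)) t.
Proof.
  intros H. apply (continuous_comp cl F). apply cl_cont. apply H. apply cl_in.
Qed.

Lemma prim_cont_all (F : R -> R) y : (forall s, continuous F s) -> continuous (fun z => RInt F 0 z) y.
Proof.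
  intros H.
  apply (ex_derive_continuous (K:=R_AbsRing) (V:=R_NormedModule)). exists (F y).
  apply (is_derive_RInt (V:=R_NormedModule) F (fun z => RInt F 0 z) 0 y).
  - exists (mkposreal _ Rlt_0_1). intros z _. apply RInt_correct_R.
    apply (ex_RInt_continuous (V:=R_CompleteNormedModule)). intros; auto.
  - auto.
Qed.

Lemma ex_RInt_all (F : R -> R) a b : (forall s, continuous F s) -> ex_RInt F a b.
Proof. intros H. apply (ex_RInt_continuous (V:=R_CompleteNormedModule)). intros; auto. Qed.

Lemma RInt_prim (F : R -> R) a b : (forall s, continuous F s) -> RInt F a b = RInt F 0 b - RInt F 0 a.
Proof.
  intros H. rewrite <- (Chasles_R F 0 a b) by (apply ex_RInt_all; auto). lra.
Qed.

Section S3.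
Variables (e : R) (f g : R -> R -> R) (x1 x2 : R -> R).
Hypothesis He : 0 < e.
Hypothesis Hf : forall p b, Om e p b -> good f p b.
Hypothesis Hg : forall p b, Om e p b -> good g p b.
Hypothesis Hcap : forall t, 0 <= t <= 1 -> f (cos (2 * PI * t)) (sin (2 * PI * t)) = x1 t /\
                           g (cos (2 * PI * t)) (sin (2 * PI * t)) = x2 t.
Hypothesis Hcx : forall t, 0 <= t <= 1 -> continuous x1 t /\ continuous (Derive x2) t.

Lemma Fk_cont (k dk : R -> R) a : -1 < a < 1 ->
  (forall a, -1 < a < 1 -> is_derive k a (dk a) /\ continuous dk a /\ k a ^ 2 = 1 - a ^ 2) ->
  continuous (fun a => f a (k a) * (pd1 g a (k a) + pd2 g a (k a) * dk a)) a.
Proof.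
  intros Ha Hk. destruct (Hk a Ha) as (Kd & Cd & Hs).
  assert (Ck : continuous k a).
  { apply (ex_derive_continuous (K:=R_AbsRing) (V:=R_NormedModule)). eexists; eauto. }
  destruct (Hf a (k a) (Om_circ e He a (k a) ltac:(lra) Hs)) as (_ & _ & F3 & F4 & _ & F6).
  destruct (Hg a (k a) (Om_circ e He a (k a) ltac:(lra) Hs)) as (_ & _ & G3 & G4 & _ & G6).
  apply cont_mult_R.
  - apply (comp2_cont f k); auto.
  - apply (continuous_plus (V:=R_NormedModule)). apply (comp2_cont (pd1 g) k); auto.
    apply cont_mult_R; auto. apply (comp2_cont (pd2 g) k); auto.
Qed.

Lemma khh : forall a, -1 < a < 1 -> is_derive hh a (dhh a) /\ continuous dhh a /\ hh a ^ 2 = 1 - a ^ 2.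
Proof. intros a Ha. split. apply hh_deriv; auto. split. apply dhh_cont; auto. apply hh_sq; lra. Qed.

Lemma kmhh : forall a, -1 < a < 1 ->
  is_derive (fun a => - hh a) a (- dhh a) /\ continuous (fun a => - dhh a) a /\ (- hh a) ^ 2 = 1 - a ^ 2.
Proof.
  intros a Ha. split. apply is_derive_opp_R. apply hh_deriv; auto. split.
  apply cont_opp_R. apply dhh_cont; auto. rewrite <- (hh_sq a) by lra. ring.
Qed.

Definition phi (s : R) := x1 (cl s) * Derive x2 (cl s).

Lemma phi_cont s : continuous phi s.
Proof.
  unfold phi. apply cont_mult_R.
  - apply (clamp_cont x1). intros; apply Hcx; auto.
  - apply (clamp_cont (Derive x2)). intros; apply Hcx; auto.
Qed.

Lemma x12_P a b : 0 <= a <= 1 -> 0 <= b <= 1 ->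
  RInt (fun t => x1 t * Derive x2 t) a b = RInt phi 0 b - RInt phi 0 a.
Proof.
  intros Ha Hb. rewrite <- RInt_prim by apply phi_cont.
  apply RInt_ext. intros t Ht. unfold phi. rewrite cl_id. auto.
  assert (0 <= Rmin a b) by (apply Rmin_glb; lra).
  assert (Rmax a b <= 1) by (apply Rmax_lub; lra). lra.
Qed.

Lemma cg_half_m h : cg (1/2 - h) = - cg h.
Proof.
  unfold cg. replace (2 * PI * (1/2 - h)) with (PI - 2 * PI * h) by field.
  rewrite cos_minus, cos_PI, sin_PI. ring.
Qed.

Lemma cg_half_p h : cg (1/2 + h) = - cg h.
Proof.
  unfold cg. replace (2 * PI * (1/2 + h)) with (PI + 2 * PI * h) by field.
  rewrite cos_plus, cos_PI, sin_PI. ring.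
Qed.

Lemma cg_one_m h : cg (1 - h) = cg h.
Proof.
  unfold cg. replace (2 * PI * (1 - h)) with (2 * PI - 2 * PI * h) by field.
  rewrite cos_minus, cos_2PI, sin_2PI. ring.
Qed.

Definition Pp (z : R) := RInt phi 0 z.
Definition Qq (z : R) := RInt (Ij f g) 0 z.
Definition Ll (s : R) := Th f g s s.
Definition EE (h : R) := Qq (cg h) - Qq (- cg h) - Ll (cg h) + Ll (- cg h)
   - (Pp (1/2 - h) - Pp h) - (Pp (1 - h) - Pp (1/2 + h)).

Lemma EE_zero h : 0 < h < 1/4 -> EE h = 0.
Proof.
  intros Hh. pose proof PI_RGT_0 as Hpi.
  set (be := cg h).
  assert (Hs : 0 < sin (2 * PI * h)) by (apply sin_gt_0; nra).
  assert (Hb : 0 < be < 1).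
  { unfold be, cg. split. apply cos_gt_0; nra.
    apply (circ_in (2 * PI * h)). rewrite Rabs_right; lra. }
  assert (F1 := ftc_step e f g He Hf Hg be Hb).
  assert (Bsplit : RInt (Bd f g) (- be) be =
     RInt (fun a => f a (hh a) * (pd1 g a (hh a) + pd2 g a (hh a) * dhh a)) (- be) be
   - RInt (fun a => f a (- hh a) * (pd1 g a (- hh a) + pd2 g a (- hh a) * (- dhh a))) (- be) be).
  { unfold Bd. apply RInt_minus_R.
    - apply (ex_RInt_continuous (V:=R_CompleteNormedModule)). intros z Hz.
      rewrite Rmin_nx, Rmax_nx in Hz by lra. apply (Fk_cont hh dhh). lra. exact khh.
    - apply (ex_RInt_continuous (V:=R_CompleteNormedModule)). intros z Hz.
      rewrite Rmin_nx, Rmax_nx in Hz by lra.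
      apply (Fk_cont (fun a => - hh a) (fun a => - dhh a)). lra. exact kmhh. }
  assert (Up : RInt (fun a => f a (hh a) * (pd1 g a (hh a) + pd2 g a (hh a) * dhh a)) (- be) be
      = RInt (fun t => x1 t * Derive x2 t) (1/2 - h) h).
  { unfold be. rewrite <- cg_half_m.
    apply (subst e f g He Hf Hg x1 x2 hh dhh (1/2 - h) h Hcap).
    - rewrite Rmin_right by lra. lra.
    - rewrite Rmax_left by lra. lra.
    - intros t Ht. rewrite Rmin_right, Rmax_left in Ht by lra.
      assert (0 < sin (2 * PI * t)) by (apply sin_gt_0; nra).
      unfold cg. split. apply circ_in. rewrite Rabs_right; lra.
      rewrite hh_cos. rewrite Rabs_right; lra.
    - exact khh. }
  assert (Lo : RInt (fun a => f a (- hh a) * (pd1 g a (- hh a) + pd2 g a (- hh a) * (- dhh a))) (- be) be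
      = RInt (fun t => x1 t * Derive x2 t) (1/2 + h) (1 - h)).
  { unfold be. rewrite <- cg_half_p. rewrite <- (cg_one_m h).
    apply (subst e f g He Hf Hg x1 x2 (fun a => - hh a) (fun a => - dhh a) (1/2 + h) (1 - h) Hcap).
    - rewrite Rmin_left by lra. lra.
    - rewrite Rmax_right by lra. lra.
    - intros t Ht. rewrite Rmin_left, Rmax_right in Ht by lra.
      assert (sin (2 * PI * t) < 0) by (apply sin_lt_0; nra).
      unfold cg. split. apply circ_in. rewrite Rabs_left; lra.
      rewrite hh_cos. rewrite Rabs_left; lra.
    - exact kmhh. }
  assert (Q1 : RInt (Ij f g) (- be) be = Qq be - Qq (- be)).
  { unfold Qq. apply RInt_prim. intros. apply (Ij_cont e f g He Hf Hg). }
  rewrite (x12_P (1/2 - h) h) in Up by lra.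
  rewrite (x12_P (1/2 + h) (1 - h)) in Lo by lra.
  unfold EE, Ll, Pp. fold be.
  lra.
Qed.

Lemma cg0 : cg 0 = 1.
Proof. unfold cg. rewrite Rmult_0_r. apply cos_0. Qed.

Lemma hh1 : hh 1 = 0.
Proof. unfold hh. replace (1 - 1 ^ 2) with 0 by ring. apply sqrt_0. Qed.
Lemma hhm1 : hh (Ropp 1) = 0.
Proof. unfold hh. replace (1 - (Ropp 1) ^ 2) with 0 by ring. apply sqrt_0. Qed.

Lemma lin_cont (a b : R) x : continuous (fun h => a + b * h) x.
Proof. apply (ex_derive_continuous (K:=R_AbsRing) (V:=R_NormedModule)). auto_derive. auto. Qed.

Lemma EE_cont : continuous EE 0.
Proof.
  assert (CQ : forall z, continuous Qq z).
  { intros z. unfold Qq. apply prim_cont_all. intros; apply (Ij_cont e f g He Hf Hg). }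
  assert (CP : forall z, continuous Pp z).
  { intros z. unfold Pp. apply prim_cont_all. apply phi_cont. }
  assert (Cmcg : continuous (fun h => - cg h) 0) by (apply cont_opp_R; apply cg_cont).
  assert (CL1 : continuous Ll (cg 0)).
  { rewrite cg0. unfold Ll. apply (Lam_cont e f g He Hf Hg). lra. }
  assert (CL2 : continuous Ll (- cg 0)).
  { rewrite cg0. unfold Ll. apply (Lam_cont e f g He Hf Hg). lra. }
  assert (CPl : forall a b, continuous (fun h => Pp (a + b * h)) 0).
  { intros a b. apply (continuous_comp (fun h => a + b * h) Pp). apply lin_cont. apply CP. }
  assert (M : forall A B : R -> R, continuous A 0 -> continuous B 0 -> continuous (fun h => A h - B h) 0).
  { intros A B HA HB. apply continuity_pt_filterlim. apply continuity_pt_minus; apply cont_pt_of; auto. }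
  assert (Pl : forall A B : R -> R, continuous A 0 -> continuous B 0 -> continuous (fun h => A h + B h) 0).
  { intros A B HA HB. apply continuity_pt_filterlim. apply continuity_pt_plus; apply cont_pt_of; auto. }
  assert (C1 : continuous (fun h => Qq (cg h)) 0).
  { apply (continuous_comp cg Qq). apply cg_cont. apply CQ. }
  assert (C2 : continuous (fun h => Qq (- cg h)) 0).
  { apply (continuous_comp (fun h => - cg h) Qq). exact Cmcg. apply CQ. }
  assert (C3 : continuous (fun h => Ll (cg h)) 0).
  { apply (continuous_comp cg Ll). apply cg_cont. exact CL1. }
  assert (C4 : continuous (fun h => Ll (- cg h)) 0).
  { apply (continuous_comp (fun h => - cg h) Ll). exact Cmcg. exact CL2. }
  assert (C5 : continuous (fun h => Pp (1/2 - h)) 0).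
  { apply (continuous_ext (fun h => Pp (1/2 + (-1) * h))). intros; f_equal; ring. apply CPl. }
  assert (C6 : continuous (fun h => Pp h) 0).
  { apply (continuous_ext (fun h => Pp (0 + 1 * h))). intros; f_equal; ring. apply CPl. }
  assert (C7 : continuous (fun h => Pp (1 - h)) 0).
  { apply (continuous_ext (fun h => Pp (1 + (-1) * h))). intros; f_equal; ring. apply CPl. }
  assert (C8 : continuous (fun h => Pp (1/2 + h)) 0).
  { apply (continuous_ext (fun h => Pp (1/2 + 1 * h))). intros; f_equal; ring. apply CPl. }
  unfold EE.
  apply (M (fun h => Qq (cg h) - Qq (- cg h) - Ll (cg h) + Ll (- cg h) - (Pp (1/2 - h) - Pp h))
           (fun h => Pp (1 - h) - Pp (1/2 + h))); [| apply M; auto].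
  apply (M (fun h => Qq (cg h) - Qq (- cg h) - Ll (cg h) + Ll (- cg h))
           (fun h => Pp (1/2 - h) - Pp h)); [| apply M; auto].
  apply (Pl (fun h => Qq (cg h) - Qq (- cg h) - Ll (cg h)) (fun h => Ll (- cg h))); auto.
Qed.

Theorem green : RInt (Ij f g) (-1) 1 = RInt (fun t => x1 t * Derive x2 t) 0 1.
Proof.
  pose proof (lim0 EE EE_cont EE_zero) as H0.
  unfold EE, Ll in H0. rewrite cg0 in H0.
  assert (T1 : Th f g 1 1 = 0) by (unfold Th; apply RInt_0pt; apply hh1).
  assert (T2 : Th f g (Ropp 1) (Ropp 1) = 0) by (unfold Th; apply RInt_0pt; apply hhm1).
  rewrite T1, T2 in H0.
  replace (1/2 - 0) with (1/2) in H0 by ring.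
  replace (1/2 + 0) with (1/2) in H0 by ring.
  replace (1 - 0) with 1 in H0 by ring.
  rewrite (x12_P 0 1) by lra.
  rewrite RInt_prim by (intros; apply (Ij_cont e f g He Hf Hg)).
  unfold Qq, Pp in H0. replace (-1) with (Ropp 1) by ring. lra.
Qed.

End S3.

Lemma Z_deriv (x1 x2 ph : R -> R) t d1 d2 :
  is_derive x1 t d1 -> is_derive x2 t d2 ->
  is_derive ph t ((x1 t * d2 - x2 t * d1) / (x1 t ^ 2 + x2 t ^ 2)) ->
  0 < x1 t ^ 2 + x2 t ^ 2 ->
  is_derive (fun s => (x2 s * cos (ph s) - x1 s * sin (ph s)) ^ 2 / (x1 s ^ 2 + x2 s ^ 2)) t 0.
Proof.
  intros H1 H2 H3 Hp.
  auto_derive.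
  - repeat split; try (eexists; eassumption). simpl in Hp. lra.
  - change (Derive (fun x : R => x1 x) t) with (Derive x1 t).
    change (Derive (fun x : R => x2 x) t) with (Derive x2 t).
    change (Derive (fun x : R => ph x) t) with (Derive ph t).
    rewrite (is_derive_unique _ _ _ H1), (is_derive_unique _ _ _ H2), (is_derive_unique _ _ _ H3).
    simpl in Hp. field. lra.
Qed.

Lemma theta_cl_cont (th : R -> R) t :
  (forall s, 0 <= s <= 1 -> filterlim th (within (fun s => 0 <= s <= 1) (locally s)) (locally (th s))) ->
  continuous (fun s => th (cl s)) t.
Proof.
  intros H. unfold continuous.
  apply (filterlim_comp _ _ _ cl th (locally t) (within (fun s => 0 <= s <= 1) (locally (cl t)))).
  - intros P HP. unfold within in HP.
    assert (Hc := cl_cont t). unfold continuous in Hc.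
    specialize (Hc _ HP). unfold filtermap in *.
    eapply filter_imp. 2: exact Hc. intros y Hy. apply Hy. apply cl_in.
  - apply H. apply cl_in.
Qed.

Section W.
Variables (x1 x2 th : R -> R).
Hypothesis HC1 : C1_curve x1 x2.
Hypothesis Hr : forall t, 0 <= t <= 1 -> 1 <= x1 t ^ 2 + x2 t ^ 2.
Hypothesis Hthc : forall t, 0 <= t <= 1 ->
  filterlim th (within (fun s => 0 <= s <= 1) (locally t)) (locally (th t)).
Hypothesis Hth : forall t, 0 <= t <= 1 ->
  x1 t = sqrt (x1 t ^ 2 + x2 t ^ 2) * cos (th t) /\ x2 t = sqrt (x1 t ^ 2 + x2 t ^ 2) * sin (th t).

Definition psi (t : R) := (x1 t * Derive x2 t - x2 t * Derive x1 t) / (x1 t ^ 2 + x2 t ^ 2).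
Definition psic (t : R) := psi (cl t).
Definition ph (t : R) := th 0 + RInt psic 0 t.
Definition Zf (t : R) := (x2 t * cos (ph t) - x1 t * sin (ph t)) ^ 2 / (x1 t ^ 2 + x2 t ^ 2).

Lemma x_cont t : 0 <= t <= 1 -> continuous x1 t /\ continuous x2 t.
Proof.
  intros Ht. destruct (HC1 t Ht) as (E1 & E2 & _).
  split; apply (ex_derive_continuous (K:=R_AbsRing) (V:=R_NormedModule)); auto.
Qed.

Lemma psi_cont t : 0 <= t <= 1 -> continuous psi t.
Proof.
  intros Ht. destruct (HC1 t Ht) as (E1 & E2 & C1 & C2). destruct (x_cont t Ht) as [X1 X2].
  specialize (Hr t Ht).
  unfold psi. apply continuity_pt_filterlim.
  apply continuity_pt_div.
  - apply continuity_pt_minus; apply continuity_pt_mult; apply cont_pt_of; auto.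
  - apply cont_pt_of. apply (ex_derive_continuous (K:=R_AbsRing) (V:=R_NormedModule)
      (fun s => x1 s ^ 2 + x2 s ^ 2)). auto_derive. auto.
  - lra.
Qed.

Lemma psic_cont t : continuous psic t.
Proof. unfold psic. apply clamp_cont. apply psi_cont. Qed.

Lemma ph_deriv t : is_derive ph t (psic t).
Proof.
  unfold ph. replace (psic t) with (0 + psic t) by ring.
  apply is_derive_plus_R. apply is_derive_const_R.
  apply (is_derive_RInt (V:=R_NormedModule) psic (fun z => RInt psic 0 z) 0 t).
  - exists (mkposreal _ Rlt_0_1). intros z _. apply RInt_correct_R. apply ex_RInt_all. apply psic_cont.
  - apply psic_cont.
Qed.

Lemma Zf_deriv t : 0 <= t <= 1 -> is_derive Zf t 0.
Proof.
  intros Ht. destruct (HC1 t Ht) as (E1 & E2 & _).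
  apply Z_deriv with (Derive x1 t) (Derive x2 t).
  - apply Derive_correct; auto.
  - apply Derive_correct; auto.
  - pose proof (ph_deriv t) as D. unfold psic in D. rewrite cl_id in D by auto. exact D.
  - specialize (Hr t Ht). lra.
Qed.

Lemma Zf_const t : 0 <= t <= 1 -> Zf t = Zf 0.
Proof.
  intros Ht. destruct (Req_dec t 0) as [->|Hn]; auto.
  destruct (MVT_gen Zf 0 t (fun _ => 0)) as [c [Hc E]].
  - intros x Hx. rewrite Rmin_left, Rmax_right in Hx by lra. apply Zf_deriv. lra.
  - intros x Hx. rewrite Rmin_left, Rmax_right in Hx by lra. apply cont_pt_of.
    apply (ex_derive_continuous (K:=R_AbsRing) (V:=R_NormedModule)). exists 0. apply Zf_deriv. lra.
  - lra.
Qed.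

Lemma ph0 : ph 0 = th 0.
Proof. unfold ph. rewrite (RInt_point (V:=R_CompleteNormedModule)). simpl. unfold zero; simpl. ring. Qed.

Lemma Zf0 : Zf 0 = 0.
Proof.
  unfold Zf. rewrite ph0. destruct (Hth 0 ltac:(lra)) as [A B].
  set (r := sqrt (x1 0 ^ 2 + x2 0 ^ 2)) in *.
  assert (N : x2 0 * cos (th 0) - x1 0 * sin (th 0) = 0) by (rewrite A, B; ring).
  rewrite N. unfold Rdiv. ring.
Qed.

Lemma sin_diff t : 0 <= t <= 1 -> sin (th t - ph t) = 0.
Proof.
  intros Ht. pose proof (Zf_const t Ht) as Z. rewrite Zf0 in Z. unfold Zf in Z.
  specialize (Hr t Ht).
  assert (Q : x2 t * cos (ph t) - x1 t * sin (ph t) = 0).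
  { set (w := x2 t * cos (ph t) - x1 t * sin (ph t)) in *.
    assert (w ^ 2 = 0).
    { apply (Rmult_eq_reg_r (/ (x1 t ^ 2 + x2 t ^ 2))). rewrite Rmult_0_l. exact Z.
      apply Rinv_neq_0_compat. lra. }
    simpl in H. nra. }
  destruct (Hth t Ht) as [A B].
  set (r := sqrt (x1 t ^ 2 + x2 t ^ 2)) in *.
  rewrite A, B in Q.
  assert (Hs : 0 < r) by (apply sqrt_lt_R0; lra).
  rewrite sin_minus.
  apply (Rmult_eq_reg_l r). rewrite Rmult_0_r. rewrite <- Q. ring. lra.
Qed.
Definition Df (t : R) := th (cl t) - ph t.

Lemma Df_cont t : continuous Df t.
Proof.
  unfold Df. apply (continuous_minus (V:=R_NormedModule)).
  apply theta_cl_cont. exact Hthc.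
  apply (ex_derive_continuous (K:=R_AbsRing) (V:=R_NormedModule)). eexists. apply ph_deriv.
Qed.

Lemma Df_sin t : 0 <= t <= 1 -> sin (Df t) = 0.
Proof. intros Ht. unfold Df. rewrite cl_id by auto. apply sin_diff; auto. Qed.

Lemma Df1 : Df 1 = 0.
Proof.
  assert (D0 : Df 0 = 0) by (unfold Df; rewrite cl_id by lra; rewrite ph0; ring).
  destruct (sin_eq_0_0 _ (Df_sin 1 ltac:(lra))) as [k Hk].
  destruct (Z.eq_dec k 0) as [->|Hk0]. rewrite Hk. ring.
  exfalso. pose proof PI_RGT_0.
  assert (Hc : continuity Df) by (intros x; apply cont_pt_of; apply Df_cont).
  destruct (Z.lt_ge_cases 0 k) as [Hpos|Hneg].
  - assert (1 <= IZR k) by (apply IZR_le; lia).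
    destruct (IVT_gen Df 0 1 (PI / 2) Hc) as [x [Hx Ex]].
    { rewrite D0, Hk. rewrite Rmin_left, Rmax_right by nra. split; nra. }
    rewrite Rmin_left, Rmax_right in Hx by lra.
    pose proof (Df_sin x Hx). rewrite Ex, sin_PI2 in H1. lra.
  - assert (IZR k <= -1) by (apply IZR_le; lia).
    destruct (IVT_gen Df 0 1 (- (PI / 2)) Hc) as [x [Hx Ex]].
    { rewrite D0, Hk. rewrite Rmin_right, Rmax_left by nra. split; nra. }
    rewrite Rmin_left, Rmax_right in Hx by lra.
    pose proof (Df_sin x Hx). rewrite Ex, sin_neg, sin_PI2 in H1. lra.
Qed.

Lemma winding_int : th 1 - th 0 = RInt psi 0 1.
Proof.
  pose proof Df1 as H. unfold Df, ph in H. rewrite cl_id in H by lra.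
  assert (E : RInt psic 0 1 = RInt psi 0 1).
  { apply RInt_ext. intros x Hx. rewrite Rmin_left, Rmax_right in Hx by lra.
    unfold psic. rewrite cl_id; auto. lra. }
  rewrite <- E. lra.
Qed.
End W.

Lemma pw_bound (x1 x2 d1 d2 de : R) : 0 < de ->
  1 <= x1 ^ 2 + x2 ^ 2 <= (1 + de) ^ 2 ->
  Rabs (/ 2 * (x1 * d2) - / 2 * (x2 * d1) - / 2 * ((x1 * d2 - x2 * d1) / (x1 ^ 2 + x2 ^ 2)))
    <= de * sqrt (d1 ^ 2 + d2 ^ 2).
Proof.
  intros Hde [HS1 HS2].
  set (S := x1 ^ 2 + x2 ^ 2) in *. set (W := x1 * d2 - x2 * d1).
  set (N := sqrt (d1 ^ 2 + d2 ^ 2)). set (r := sqrt S).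
  assert (Hr2 : r * r = S) by (apply sqrt_sqrt; lra).
  assert (HN2 : N * N = d1 ^ 2 + d2 ^ 2) by (apply sqrt_sqrt; nra).
  assert (HN0 : 0 <= N) by apply sqrt_pos.
  assert (Hr1 : 1 <= r).
  { unfold r. rewrite <- sqrt_1. apply sqrt_le_1_alt. lra. }
  assert (Hrd : r <= 1 + de).
  { unfold r. rewrite <- (sqrt_pow2 (1 + de)) by lra. apply sqrt_le_1_alt. lra. }
  assert (HW : W * W <= (r * N) * (r * N)).
  { replace ((r * N) * (r * N)) with (S * (d1 ^ 2 + d2 ^ 2)) by (rewrite <- Hr2, <- HN2; ring).
    assert (S * (d1 ^ 2 + d2 ^ 2) - W * W = (x1 * d1 + x2 * d2) ^ 2) by (unfold S, W; ring).
    pose proof (pow2_ge_0 (x1 * d1 + x2 * d2)). lra. }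
  assert (HWa : Rabs W <= r * N).
  { rewrite <- (Rabs_right (r * N)) by nra. apply Rsqr_le_abs_0. unfold Rsqr. lra. }
  replace (/ 2 * (x1 * d2) - / 2 * (x2 * d1) - / 2 * (W / S)) with (W * ((S - 1) / (2 * S)))
    by (unfold W; field; lra).
  rewrite Rabs_mult. rewrite (Rabs_right ((S - 1) / (2 * S))).
  2: { apply Rle_ge. apply Rdiv_le_0_compat; lra. }
  apply Rle_trans with ((r * N) * ((S - 1) / (2 * S))).
  { apply Rmult_le_compat_r. apply Rdiv_le_0_compat; lra. exact HWa. }
  rewrite <- Hr2.
  replace (r * N * ((r * r - 1) / (2 * (r * r)))) with (N * ((r * r - 1) / (2 * r))) by (field; lra).
  rewrite Rmult_comm. apply Rmult_le_compat_r. exact HN0.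
  apply (Rmult_le_reg_r (2 * r)). lra.
  replace ((r * r - 1) / (2 * r) * (2 * r)) with (r * r - 1) by (field; lra).
  nra.
Qed.

Lemma RInt_scal_R (F : R -> R) a b c : ex_RInt F a b -> RInt (fun x => c * F x) a b = c * RInt F a b.
Proof. intros H. apply (RInt_scal (V:=R_CompleteNormedModule) F a b c H). Qed.

Lemma ex_RInt_scal_R (F : R -> R) a b c : ex_RInt F a b -> ex_RInt (fun x => c * F x) a b.
Proof. intros H. apply (ex_RInt_scal (V:=R_CompleteNormedModule) F a b c H). Qed.

Lemma cont_sq (A : R -> R) x : continuous A x -> continuous (fun s => A s ^ 2) x.
Proof.
  intros H. apply continuity_pt_filterlim.
  apply (continuity_pt_ext (fun s => A s * A s)). intros; simpl; ring.
  apply continuity_pt_mult; apply cont_pt_of; auto.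
Qed.

Theorem lemma4p1 (delta : R) (x1 x2 : R -> R) (u1 u2 : R -> R -> R) (n : Z) :
  0 < delta ->
  C1_curve x1 x2 ->
  closed_curve x1 x2 ->
  (forall t, 0 <= t <= 1 ->
     1 <= x1 t ^ 2 + x2 t ^ 2 <= (1 + delta) ^ 2) ->
  capping_disc x1 x2 u1 u2 ->
  winding_number x1 x2 n ->
  Rabs (pullback_area u1 u2 - PI * IZR n) <= curve_length x1 x2 * delta.
Proof.
  intros Hd HC1 Hcl Hring Hcap Hw.
  destruct Hcap as [[e [He [Cu1 Cu2]]] Hbd].
  assert (Hf : forall p b, Om e p b -> good u1 p b).
  { intros p b H. apply (good_of_C1 (Om e)). exact Cu1. apply Om_open. exact H. }
  assert (Hg : forall p b, Om e p b -> good u2 p b).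
  { intros p b H. apply (good_of_C1 (Om e)). exact Cu2. apply Om_open. exact H. }
  assert (Hcx : forall t, 0 <= t <= 1 -> continuous x1 t /\ continuous (Derive x2) t).
  { intros t Ht. destruct (HC1 t Ht) as (E1 & E2 & C1 & C2). split; auto.
    apply (ex_derive_continuous (K:=R_AbsRing) (V:=R_NormedModule)); auto. }
  pose proof (green e u1 u2 x1 x2 He Hf Hg Hbd Hcx) as G.
  change (pullback_area u1 u2) with (RInt (Ij u1 u2) (-1) 1). rewrite G.
  assert (Hr : forall t, 0 <= t <= 1 -> 1 <= x1 t ^ 2 + x2 t ^ 2) by (intros t Ht; apply Hring; auto).
  destruct Hw as [th [Hthc [Hth Hn]]].
  pose proof (winding_int x1 x2 th HC1 Hr Hthc Hth) as W. rewrite Hn in W.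
  assert (CX : forall t, 0 <= t <= 1 -> continuous x1 t /\ continuous x2 t /\
     continuous (Derive x1) t /\ continuous (Derive x2) t).
  { intros t Ht. destruct (HC1 t Ht) as (E1 & E2 & C1 & C2).
    split; [|split]; auto; apply (ex_derive_continuous (K:=R_AbsRing) (V:=R_NormedModule)); auto. }
  assert (EX : forall F : R -> R, (forall t, 0 <= t <= 1 -> continuous F t) -> ex_RInt F 0 1).
  { intros F HF. apply (ex_RInt_continuous (V:=R_CompleteNormedModule)). intros z Hz.
    rewrite Rmin_left, Rmax_right in Hz by lra. auto. }
  set (A1 := fun t => x1 t * Derive x2 t).
  set (A2 := fun t => x2 t * Derive x1 t).
  assert (EA1 : ex_RInt A1 0 1).
  { apply EX. intros t Ht. destruct (CX t Ht) as (? & ? & ? & ?). apply cont_mult_R; auto. }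
  assert (EA2 : ex_RInt A2 0 1).
  { apply EX. intros t Ht. destruct (CX t Ht) as (? & ? & ? & ?). apply cont_mult_R; auto. }
  assert (EP : ex_RInt (psi x1 x2) 0 1).
  { apply EX. intros t Ht. apply (psi_cont x1 x2 HC1 Hr t Ht). }
  assert (IBP : RInt A1 0 1 = - RInt A2 0 1).
  { unfold A1. rewrite (ibp x1 x2 (Derive x1) (Derive x2) 0 1).
    - destruct Hcl as [Hc1 Hc2]. rewrite Hc1, Hc2.
      assert (E : RInt (fun t => Derive x1 t * x2 t) 0 1 = RInt A2 0 1).
      { apply RInt_ext. intros; unfold A2; apply Rmult_comm. }
      rewrite E. lra.
    - intros t Ht. rewrite Rmin_left, Rmax_right in Ht by lra.
      destruct (HC1 t Ht) as (E1 & E2 & C1 & C2).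
      split; [apply Derive_correct; auto|]. split; [apply Derive_correct; auto|]. auto. }
  set (Gf := fun t => / 2 * A1 t - / 2 * A2 t - / 2 * psi x1 x2 t).
  assert (EG : RInt Gf 0 1 = RInt A1 0 1 - PI * IZR n).
  { unfold Gf. rewrite RInt_minus_R, RInt_minus_R.
    - rewrite (RInt_scal_R A1 0 1 (/ 2) EA1).
      rewrite (RInt_scal_R A2 0 1 (/ 2) EA2).
      rewrite (RInt_scal_R (psi x1 x2) 0 1 (/ 2) EP).
      rewrite <- W, IBP. match goal with |- ?a = ?b => change (@eq R a b) end. field.
    - apply (ex_RInt_scal_R A1 0 1 (/ 2) EA1).
    - apply (ex_RInt_scal_R A2 0 1 (/ 2) EA2).
    - apply ex_RInt_minus_R.
      apply (ex_RInt_scal_R A1 0 1 (/ 2) EA1).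
      apply (ex_RInt_scal_R A2 0 1 (/ 2) EA2).
    - apply (ex_RInt_scal_R (psi x1 x2) 0 1 (/ 2) EP). }
  rewrite <- EG.
  set (Nf := fun t => sqrt (Derive x1 t ^ 2 + Derive x2 t ^ 2)).
  assert (ENf : ex_RInt Nf 0 1).
  { apply EX. intros t Ht. destruct (CX t Ht) as (? & ? & ? & ?). unfold Nf.
    apply continuous_sqrt_comp. apply (continuous_plus (V:=R_NormedModule)); apply cont_sq; auto. }
  assert (EGf : ex_RInt Gf 0 1).
  { unfold Gf. apply ex_RInt_minus_R. apply ex_RInt_minus_R.
    apply (ex_RInt_scal_R A1 0 1 (/ 2) EA1).
    apply (ex_RInt_scal_R A2 0 1 (/ 2) EA2).
    apply (ex_RInt_scal_R (psi x1 x2) 0 1 (/ 2) EP). }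
  eapply Rle_trans. apply abs_RInt_le. lra. exact EGf.
  unfold curve_length. fold Nf.
  rewrite Rmult_comm.
  replace (delta * RInt Nf 0 1) with (RInt (fun t => delta * Nf t) 0 1).
  2: { apply RInt_scal_R. exact ENf. }
  apply RInt_le. lra.
  - apply EX. intros t Ht. destruct (CX t Ht) as (? & ? & ? & ?).
    assert (CG : continuous Gf t).
    { assert (C1 : continuous A1 t) by (apply cont_mult_R; auto).
      assert (C2 : continuous A2 t) by (apply cont_mult_R; auto).
      assert (C3 : continuous (psi x1 x2) t) by (apply (psi_cont x1 x2 HC1 Hr t Ht)).
      assert (K : continuous (fun _ : R => / 2) t) by apply continuous_const.
      unfold Gf. apply continuity_pt_filterlim.
      apply continuity_pt_minus; [apply continuity_pt_minus|]; apply cont_pt_of;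
      apply (cont_mult_R (fun _ => / 2)); auto. }
    apply continuity_pt_filterlim.
    apply (continuity_pt_comp Gf Rabs). apply cont_pt_of; auto. apply Rcontinuity_abs.
  - apply (ex_RInt_scal_R Nf 0 1 delta ENf).
  - intros t Ht. unfold Gf, A1, A2, psi, Nf. apply pw_bound. exact Hd. apply Hring. lra.
Qed.
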